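(* Let $\Omega=(0,L)^2$, $\varepsilon>0$, $T>0$, and let $u(\mathbf{x},t)$ be a sufficiently smooth solution of the Allen–Cahn equation $\partial_tu=\varepsilon^2\Delta u-f(u)$ on $\Omega\times(0,T]$, $f(u)=u^3-u$, with periodic boundary conditions and smooth initial data $u_0$ with $|u_0|\le1$. Let $M$ be a positive integer, $h=L/M$, $\Lambda_h$ the standard five-point central-difference matrix of the Laplacian on the periodic grid $\{\mathbf{x}_h=(ih,jh):1\le i,j\le M\}$, and $\|\cdot\|_\infty$ the grid maximum norm. Let $0=t_0<\dots<t_N=T$, $\tau_k=t_k-t_{k-1}$, $\tau=\max_k\tau_k$, $r_k=\tau_k/\tau_{k-1}$ ($2\le k\le N$), $r_1:=0$. Let $u_h^n$ solve $$D_2u^n=\varepsilon^2\Lambda_hu^n-f(u^n),\quad 1\le n\le N,\qquad u^0=u_0(\mathbf{x}_h),$$ with $f$ componentwise, $D_2u^1=(u^1-u^0)/\tau_1$ and for $n\ge2$ $D_2u^n=\frac{1+2r_n}{\tau_n(1+r_n)}(u^n-u^{n-1})-\frac{r_n^2}{\tau_n(1+r_n)}(u^{n-1}-u^{n-2})$. Let $r_s\in[1,1+\sqrt2)$ satisfy $0<r_k\le r_s$ for $2\le k\le N$, set $\eta=\frac{2r_s^2}{(1+r_s)^2}$, and assume $$\tau_n\le\frac{(1+2r_n)\eta-r_n^2}{\eta^2(1+r_n)}\cdot\frac{1-\eta}{2+4\varepsilon^2h^{-2}}\quad\text{for } n\ge1.$$ Then $$\big\|u(\mathbf{x}_h,t_n)-u_h^n\big\|_\infty\le\frac{C_ut_n}{1-\eta}\exp\Big(\frac{4t_n}{1-\eta}\Big)(\tau^2+h^2)\qquad\text{for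 }1\le n\le N,$$ where $C_u$ is a constant independent of the time-step sizes and time-step ratios. *)

(* Defs.v *)
From Stdlib Require Import Reals Lra Lia List.
From Coquelicot Require Import Coquelicot.
Open Scope R_scope.

Definition f_ac (v : R) : R := v ^ 3 - v.

(* u : R -> R -> R -> R, arguments (x, y, t).  "Smooth": all iterated partial
   derivatives (in x = direction 0, y = direction 1, t = direction 2) exist
   everywhere and are jointly continuous.  D l is the iterated derivative along
   the list of directions l (head = last derivative taken). *)
Definition smooth3 (u : R -> R -> R -> R) : Prop :=
  exists D : list nat -> R -> R -> R -> R,
    D nil = u /\
    forall l x y t,
      is_derive (fun s => D l s y t) x (D (0%nat :: l) x y t) /\
      is_derive (fun s => D l x s t) y (D (1%nat :: l) x y t) /\
      is_derive (fun s => D l x y s) t (D (2%nat :: l) x y t) /\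
      continuous (fun p : R * R * R => D l (fst (fst p)) (snd (fst p)) (snd p))
                 (x, y, t).

Definition dt (u : R -> R -> R -> R) x y t : R := Derive (fun s => u x y s) t.
Definition dxx (u : R -> R -> R -> R) x y t : R :=
  Derive (fun a => Derive (fun b => u b y t) a) x.
Definition dyy (u : R -> R -> R -> R) x y t : R :=
  Derive (fun a => Derive (fun b => u x b t) a) y.

(* Grid functions on the periodic M x M grid: v i j ~ value at (i h, j h),
   indices taken modulo M (indices 0..M-1; index 0 is identified with M). *)
Definition grid := nat -> nat -> R.

Definition lap_h (M : nat) (h : R) (v : grid) (i j : nat) : R :=
  (v ((i + 1) mod M)%nat j + v ((i + M - 1) mod M)%nat j
   + v i ((j + 1) mod M)%nat + v i ((j + M - 1) mod M)%nat
   - 4 * v i j) / (h ^ 2).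

Definition tau_k (t : nat -> R) (k : nat) : R := t k - t (k - 1)%nat.

Definition ratio (t : nat -> R) (k : nat) : R :=
  match k with
  | O | S O => 0
  | _ => tau_k t k / tau_k t (k - 1)%nat
  end.

Definition tau_max (t : nat -> R) (N : nat) : R :=
  fold_right Rmax 0 (map (fun k => tau_k t (S k)) (seq 0 N)).

Definition D2 (t : nat -> R) (U : nat -> grid) (n i j : nat) : R :=
  match n with
  | O => 0
  | S O => (U 1%nat i j - U 0%nat i j) / tau_k t 1
  | _ =>
      let r := ratio t n in
      let tn := tau_k t n in
      (1 + 2 * r) / (tn * (1 + r)) * (U n i j - U (n - 1)%nat i j)
      - r ^ 2 / (tn * (1 + r)) * (U (n - 1)%nat i j - U (n - 2)%nat i j)
  end.

(* Main.v *)
Require Import Defs.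
From Stdlib Require Import Reals Lra Lia List Classical.
From Coquelicot Require Import Coquelicot.
Open Scope R_scope.

Lemma mvt_bound (g dg : R -> R) a b B :
  (forall c, is_derive g c (dg c)) -> a <= b ->
  (forall c, a <= c <= b -> Rabs (dg c) <= B) ->
  Rabs (g b - g a) <= B * (b - a).
Proof.
  intros Hd Hab HB.
  destruct (MVT_gen g a b dg) as [c [Hc Heq]].
  - intros; apply Hd.
  - intros x _; apply continuity_pt_filterlim.
    apply (ex_derive_continuous (K:=R_AbsRing) (V:=R_NormedModule) g x).
    eexists; apply Hd.
  - rewrite Heq. rewrite Rabs_mult. rewrite (Rabs_right (b - a)) by lra.
    apply Rmult_le_compat_r; [lra|]. apply HB.
    rewrite Rmin_left in Hc by lra. rewrite Rmax_right in Hc by lra. lra.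
Qed.

Lemma ltg (Q : R -> R -> R -> Prop) a b :
  a <= b ->
  (forall z d d' B B', Q z d B -> 0 < d' <= d -> B <= B' -> Q z d' B') ->
  (forall z0, a <= z0 <= b -> exists r d B, 0 < r /\ 0 < d /\
        forall z, Rabs (z - z0) < r -> Q z d B) ->
  exists d B, 0 < d /\ forall z, a <= z <= b -> Q z d B.
Proof.
  intros Hab Hmon Hloc.
  set (S := fun s => a <= s <= b /\ exists d B, 0 < d /\ forall z, a <= z <= s -> Q z d B).
  assert (HSa : S a).
  { split; [lra|]. destruct (Hloc a) as [r [d [B [Hr [Hd HQ]]]]]; [lra|].
    exists d, B; split; auto. intros z Hz. apply HQ.
    replace (z - a) with 0 by lra. rewrite Rabs_R0; lra. }
  destruct (completeness S) as [m [Hub Hlub]].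
  { exists b. intros s [Hs _]; lra. }
  { exists a; exact HSa. }
  assert (Ham : a <= m) by (apply Hub; exact HSa).
  assert (Hmb : m <= b) by (apply Hlub; intros s [Hs _]; lra).
  destruct (Hloc m) as [r [d0 [B0 [Hr [Hd0 HQ0]]]]]; [lra|].
  assert (Hex : exists s, S s /\ m - r < s).
  { apply NNPP; intro Hn.
    assert (m <= m - r); [|lra].
    apply Hlub. intros s Hs. destruct (Rle_dec s (m - r)); auto.
    exfalso; apply Hn; exists s; split; auto; lra. }
  destruct Hex as [s [[Hs [d1 [B1 [Hd1 HQ1]]]] Hsm]].
  set (s' := Rmin b (m + r/2)).
  assert (HSs' : S s').
  { split. { unfold s'. split; [apply Rmin_glb; lra| apply Rmin_l]. }
    exists (Rmin d1 d0), (Rmax B1 B0). split; [apply Rmin_glb_lt; lra|].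
    intros z Hz.
    destruct (Rle_dec z s).
    - eapply Hmon; [apply HQ1; lra | split; [apply Rmin_glb_lt; lra| apply Rmin_l] | apply Rmax_l].
    - eapply Hmon; [apply HQ0 | split; [apply Rmin_glb_lt; lra| apply Rmin_r] | apply Rmax_r].
      assert (z <= m + r/2) by (pose proof (Rmin_r b (m + r/2)); unfold s' in Hz; lra).
      apply Rabs_def1; lra. }
  assert (Hs'm : s' <= m) by (apply Hub; exact HSs').
  assert (Hs'b : s' = b).
  { unfold s' in *. destruct (Rle_dec b (m + r/2)).
    - apply Rmin_left; auto.
    - rewrite Rmin_right in Hs'm; lra. }
  rewrite Hs'b in HSs'. destruct HSs' as [_ [d [B [Hd HQ]]]].
  exists d, B; split; auto.
Qed.

Lemma cont3_ed (F : R -> R -> R -> R) x y t :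
  continuous (fun p : R*R*R => F (fst (fst p)) (snd (fst p)) (snd p)) (x,y,t) ->
  forall e, 0 < e -> exists d, 0 < d /\ forall x' y' t', Rabs (x'-x) < d -> Rabs (y'-y) < d -> Rabs (t'-t) < d ->
   Rabs (F x' y' t' - F x y t) < e.
Proof.
  intros Hc e He.
  destruct (proj1 (filterlim_locally _ _) Hc (mkposreal e He)) as [d Hd].
  exists d; split; [apply cond_pos|].
  intros x' y' t' h1 h2 h3.
  specialize (Hd (x',y',t')).
  simpl in Hd. 
  assert (HH: ball (x, y, t) d (x', y', t')).
  { split; [split|]; assumption. }
  specialize (Hd HH). exact Hd.
Qed.

Lemma box_bound (F : R -> R -> R -> R) a1 b1 a2 b2 a3 b3 :
  a1 <= b1 -> a2 <= b2 -> a3 <= b3 ->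
  (forall x y t, continuous (fun p : R*R*R => F (fst (fst p)) (snd (fst p)) (snd p)) (x,y,t)) ->
  exists B, forall x y t, a1 <= x <= b1 -> a2 <= y <= b2 -> a3 <= t <= b3 -> Rabs (F x y t) <= B.
Proof.
  intros H1 H2 H3 Hc.
  assert (Lt : forall x0 y0, exists d B, 0 < d /\ forall t, a3 <= t <= b3 ->
     forall x y, Rabs (x - x0) < d -> Rabs (y - y0) < d -> Rabs (F x y t) <= B).
  { intros x0 y0.
    apply (ltg (fun t d B => forall x y, Rabs (x - x0) < d -> Rabs (y - y0) < d -> Rabs (F x y t) <= B)); auto.
    - intros z d d' B B' HQ Hd HB x y hx hy. eapply Rle_trans; [apply HQ; lra|lra].
    - intros t0 _. destruct (cont3_ed F x0 y0 t0 (Hc _ _ _) 1) as [d [Hd HF]]; [lra|].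
      exists d, d, (Rabs (F x0 y0 t0) + 1). split; [lra|split;[lra|]].
      intros t ht x y hx hy. specialize (HF x y t hx hy ht).
      pose proof (Rabs_triang_inv (F x y t) (F x0 y0 t0)). lra. }
  assert (Ly : forall x0, exists d B, 0 < d /\ forall y, a2 <= y <= b2 ->
     forall x, Rabs (x - x0) < d -> forall t, a3 <= t <= b3 -> Rabs (F x y t) <= B).
  { intros x0.
    apply (ltg (fun y d B => forall x, Rabs (x - x0) < d -> forall t, a3 <= t <= b3 -> Rabs (F x y t) <= B)); auto.
    - intros z d d' B B' HQ Hd HB x hx t ht. eapply Rle_trans; [apply HQ; auto; lra|lra].
    - intros y0 _. destruct (Lt x0 y0) as [d [B [Hd HQ]]].
      exists d, d, B. split; [lra|split;[lra|]].
      intros y hy x hx t ht. apply HQ; auto. }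
  destruct (ltg (fun x d B => forall y, a2 <= y <= b2 -> forall t, a3 <= t <= b3 -> Rabs (F x y t) <= B) a1 b1)
    as [d [B [Hd HQ]]]; auto.
  - intros z d d' B B' HQ Hd HB y hy t ht. eapply Rle_trans; [apply HQ; auto|lra].
  - intros x0 _. destruct (Ly x0) as [d [B [Hd HQ]]].
    exists d, d, B. split; [lra|split;[lra|]].
    intros x hx y hy t ht. apply HQ; auto.
  - exists B. intros x y t hx hy ht. apply HQ; auto.
Qed.
Lemma isd_plus (f g : R -> R) x df dg : is_derive f x df -> is_derive g x dg -> is_derive (fun s => f s + g s) x (df + dg).
Proof. intros; apply (is_derive_plus f g); auto. Qed.
Lemma isd_minus (f g : R -> R) x df dg : is_derive f x df -> is_derive g x dg -> is_derive (fun s => f s - g s) x (df - dg).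
Proof. intros; apply (is_derive_minus f g); auto. Qed.
Lemma isd_const (c x : R) : is_derive (fun _ => c) x 0.
Proof. apply (is_derive_const c x). Qed.
Lemma isd_ext (f g : R -> R) x df dg : (forall s, f s = g s) -> df = dg -> is_derive f x df -> is_derive g x dg.
Proof. intros H1 H2 H3; subst; eapply is_derive_ext; eauto. Qed.
Lemma isd_shp (f df : R -> R) x s : (forall z, is_derive f z (df z)) -> is_derive (fun s => f (x + s)) s (df (x + s)).
Proof. intros Hf. assert (Hg : is_derive (fun s => x + s) s 1).
  { auto_derive; auto; ring. }
  pose proof (is_derive_comp f (fun s => x + s) s (df (x+s)) 1 (Hf _) Hg) as H.
  eapply isd_ext; [| | exact H]; [reflexivity| ]. simpl. unfold scal; simpl; unfold mult; simpl. ring. Qed.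
Lemma isd_shm (f df : R -> R) x s : (forall z, is_derive f z (df z)) -> is_derive (fun s => f (x - s)) s (- df (x - s)).
Proof. intros Hf. assert (Hg : is_derive (fun s => x - s) s (-1)).
  { auto_derive; auto; ring. }
  pose proof (is_derive_comp f (fun s => x - s) s (df (x-s)) (-1) (Hf _) Hg) as H.
  eapply isd_ext; [| | exact H]; [reflexivity| ]. simpl. unfold scal; simpl; unfold mult; simpl. ring. Qed.
Lemma isd_sq (c : R) s : is_derive (fun s => s^2 * c) s (2 * s * c).
Proof. auto_derive; auto; ring. Qed.
Lemma isd_lin (c : R) s : is_derive (fun s => 2 * s * c) s (2 * c).
Proof. auto_derive; auto; ring. Qed.

Lemma isd_ext' (f : R -> R) x df dg : is_derive f x df -> df = dg -> is_derive f x dg.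
Proof. intros H1 H2; subst; auto. Qed.

Lemma taylor4 (g g1 g2 g3 g4 : R -> R) x h K :
  (forall z, is_derive g z (g1 z)) -> (forall z, is_derive g1 z (g2 z)) ->
  (forall z, is_derive g2 z (g3 z)) -> (forall z, is_derive g3 z (g4 z)) -> 0 < h ->
  (forall z, x - h <= z <= x + h -> Rabs (g4 z) <= K) ->
  Rabs (g (x+h) + g (x-h) - 2 * g x - h^2 * g2 x) <= 2 * K * h^4.
Proof.
  intros D1 D2 D3 D4 Hh HK.
  assert (K0 : 0 <= K) by (eapply Rle_trans; [apply Rabs_pos| apply (HK x); lra]).
  assert (P3 : forall s, 0 <= s <= h -> Rabs (g3 (x+s) - g3 (x-s)) <= 2 * K * s).
  { intros s Hs. eapply Rle_trans. apply (mvt_bound g3 g4 (x-s) (x+s) K); auto; try lra.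
    intros c Hc; apply HK; lra. lra. }
  assert (P2 : forall s, 0 <= s <= h -> Rabs (g2 (x+s) + g2 (x-s) - 2 * g2 x) <= 2 * K * s^2).
  { intros s Hs.
    pose proof (mvt_bound (fun s => g2 (x+s) + g2 (x-s) - 2 * g2 x) (fun s => g3 (x+s) - g3 (x-s)) 0 s (2*K*s)) as H.
    cbv beta in H; replace (x - 0) with x in H by ring. replace (x + 0) with x in H by ring.
    replace (g2 (x + s) + g2 (x - s) - 2 * g2 x) with ((g2 (x + s) + g2 (x - s) - 2 * g2 x) - (g2 x + g2 x - 2 * g2 x)) by ring.
    eapply Rle_trans; [apply H|].
    - intros c. eapply isd_ext'. apply isd_minus. apply isd_plus. apply (isd_shp g2 g3 x c D3). apply (isd_shm g2 g3 x c D3). apply isd_const. simpl; ring.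
    - lra.
    - intros c Hc. eapply Rle_trans; [apply P3; lra|]. apply Rmult_le_compat_l; lra.
    - simpl; lra. }
  assert (P1 : forall s, 0 <= s <= h -> Rabs (g1 (x+s) - g1 (x-s) - 2 * s * g2 x) <= 2 * K * s^3).
  { intros s Hs.
    pose proof (mvt_bound (fun s => g1 (x+s) - g1 (x-s) - 2 * s * g2 x) (fun s => g2 (x+s) + g2 (x-s) - 2 * g2 x) 0 s (2*K*s^2)) as H.
    cbv beta in H; replace (x - 0) with x in H by ring. replace (x + 0) with x in H by ring.
    replace (g1 (x + s) - g1 (x - s) - 2 * s * g2 x) with ((g1 (x + s) - g1 (x - s) - 2 * s * g2 x) - (g1 x - g1 x - 2 * 0 * g2 x)) by ring.
    eapply Rle_trans; [apply H|].
    - intros c. eapply isd_ext'. apply isd_minus. apply isd_minus. apply (isd_shp g1 g2 x c D2). apply (isd_shm g1 g2 x c D2). apply isd_lin. simpl; ring.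
    - lra.
    - intros c Hc. eapply Rle_trans; [apply P2; lra|]. apply Rmult_le_compat_l; [lra|].
      apply pow_incr; lra.
    - simpl; lra. }
  pose proof (mvt_bound (fun s => g (x+s) + g (x-s) - 2 * g x - s^2 * g2 x) (fun s => g1 (x+s) - g1 (x-s) - 2 * s * g2 x) 0 h (2*K*h^3)) as H.
  cbv beta in H; replace (x - 0) with x in H by ring. replace (x + 0) with x in H by ring.
  replace (g (x + h) + g (x - h) - 2 * g x - h^2 * g2 x) with ((g (x + h) + g (x - h) - 2 * g x - h^2 * g2 x) - (g x + g x - 2 * g x - 0^2 * g2 x)) by ring.
  eapply Rle_trans; [apply H|].
  - intros c. eapply isd_ext'. apply isd_minus. apply isd_minus. apply isd_plus. apply (isd_shp g g1 x c D1). apply (isd_shm g g1 x c D1). apply isd_const. apply isd_sq. simpl; ring.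
  - lra.
  - intros c Hc. eapply Rle_trans; [apply P1; lra|]. apply Rmult_le_compat_l; [lra|].
    apply pow_incr; lra.
  - simpl; lra.
Qed.

Definition Dprop (D : list nat -> R -> R -> R -> R) : Prop :=
  forall l x y t,
      is_derive (fun s => D l s y t) x (D (0%nat :: l) x y t) /\
      is_derive (fun s => D l x s t) y (D (1%nat :: l) x y t) /\
      is_derive (fun s => D l x y s) t (D (2%nat :: l) x y t) /\
      continuous (fun p : R * R * R => D l (fst (fst p)) (snd (fst p)) (snd p)) (x, y, t).

Lemma dt_D D x y t : Dprop D -> dt (D nil) x y t = D (2%nat :: nil) x y t.
Proof. intros HD. unfold dt. apply is_derive_unique. apply (HD nil x y t). Qed.

Lemma dxx_D D x y t : Dprop D -> dxx (D nil) x y t = D (0%nat :: 0%nat :: nil) x y t.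
Proof. intros HD. unfold dxx.
  rewrite (Derive_ext _ (fun a => D (0%nat :: nil) a y t)).
  - apply is_derive_unique. apply (HD (0%nat :: nil) x y t).
  - intros a. apply is_derive_unique. apply (HD nil a y t).
Qed.

Lemma dyy_D D x y t : Dprop D -> dyy (D nil) x y t = D (1%nat :: 1%nat :: nil) x y t.
Proof. intros HD. unfold dyy.
  rewrite (Derive_ext _ (fun a => D (1%nat :: nil) x a t)).
  - apply is_derive_unique. apply (HD (1%nat :: nil) x y t).
  - intros a. apply is_derive_unique. apply (HD nil x a t).
Qed.

Definition PF (D : list nat -> R -> R -> R -> R) (eps x y t : R) : R := D (2%nat :: nil) x y t
   - eps ^ 2 * (D (0%nat :: 0%nat :: nil) x y t + D (1%nat :: 1%nat :: nil) x y t)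
   + f_ac (D nil x y t).

Lemma PF_cont D eps x y t : Dprop D ->
  continuous (fun p : R*R*R => PF D eps (fst (fst p)) (snd (fst p)) (snd p)) (x,y,t).
Proof.
  intros HD.
  pose proof (proj2 (proj2 (proj2 (HD (2%nat :: nil) x y t)))) as C2.
  pose proof (proj2 (proj2 (proj2 (HD (0%nat :: 0%nat :: nil) x y t)))) as C00.
  pose proof (proj2 (proj2 (proj2 (HD (1%nat :: 1%nat :: nil) x y t)))) as C11.
  pose proof (proj2 (proj2 (proj2 (HD nil x y t)))) as C0.
  set (d2 := fun p : R*R*R => D (2%nat :: nil) (fst (fst p)) (snd (fst p)) (snd p)) in *.
  set (d00 := fun p : R*R*R => D (0%nat :: 0%nat :: nil) (fst (fst p)) (snd (fst p)) (snd p)) in *.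
  set (d11 := fun p : R*R*R => D (1%nat :: 1%nat :: nil) (fst (fst p)) (snd (fst p)) (snd p)) in *.
  set (d0 := fun p : R*R*R => D nil (fst (fst p)) (snd (fst p)) (snd p)) in *.
  assert (H : continuous (fun p : R*R*R => @plus (NormedModule.AbelianMonoid R_AbsRing R_NormedModule)
      (@minus (NormedModule.AbelianGroup R_AbsRing R_NormedModule) (d2 p)
         (@scal R_Ring (NormedModule.ModuleSpace R_AbsRing R_NormedModule) (eps ^ 2)
             (@plus (NormedModule.AbelianMonoid R_AbsRing R_NormedModule) (d00 p) (d11 p))))
      (@minus (NormedModule.AbelianGroup R_AbsRing R_NormedModule)
          (@mult R_AbsRing (d0 p) (@mult R_AbsRing (d0 p) (d0 p))) (d0 p))) (x,y,t)).
  { apply (continuous_plus (K:=R_AbsRing) (V:=R_NormedModule)).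
    apply (continuous_minus (K:=R_AbsRing) (V:=R_NormedModule)). exact C2.
    apply (continuous_scal (K:=R_AbsRing) (V:=R_NormedModule)). apply continuous_const.
    apply (continuous_plus (K:=R_AbsRing) (V:=R_NormedModule)). exact C00. exact C11.
    apply (continuous_minus (K:=R_AbsRing) (V:=R_NormedModule)).
    apply (continuous_mult (K:=R_AbsRing)). exact C0.
    apply (continuous_mult (K:=R_AbsRing)). exact C0. exact C0. exact C0. }
  eapply continuous_ext; [|exact H].
  intros p. unfold PF, f_ac, d2, d00, d11, d0. simpl. unfold plus, minus, scal, mult, opp; simpl.
  unfold plus, opp, mult; simpl. ring.
Qed.

Lemma pde_closed D L eps T : Dprop D -> 0 < L ->
  (forall x y t, 0 < x < L -> 0 < y < L -> 0 < t <= T ->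
       dt (D nil) x y t = eps ^ 2 * (dxx (D nil) x y t + dyy (D nil) x y t) - f_ac (D nil x y t)) ->
  forall x y t, 0 <= x < L -> 0 <= y < L -> 0 < t <= T -> PF D eps x y t = 0.
Proof.
  intros HD HL Hpde.
  assert (Hin : forall x y t, 0 < x < L -> 0 < y < L -> 0 < t <= T -> PF D eps x y t = 0).
  { intros x y t hx hy ht. specialize (Hpde x y t hx hy ht).
    rewrite dt_D, dxx_D, dyy_D in Hpde by auto. unfold PF. lra. }
  intros x y t hx hy ht.
  destruct (Req_dec (PF D eps x y t) 0) as [|Hne]; auto. exfalso.
  assert (Hp : 0 < Rabs (PF D eps x y t)) by (apply Rabs_pos_lt; auto).
  destruct (cont3_ed (PF D eps) x y t (PF_cont D eps x y t HD) _ Hp) as [d [Hd Hc]].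
  set (m := Rmax x y).
  assert (Hm : x <= m /\ y <= m /\ m < L) by (unfold m; split; [apply Rmax_l| split; [apply Rmax_r| apply Rmax_lub_lt; lra]]).
  set (s := Rmin (d / 2) ((L - m) / 2)).
  assert (Hs : 0 < s /\ s <= d / 2 /\ s <= (L - m) / 2).
  { unfold s; split; [apply Rmin_glb_lt; lra| split; [apply Rmin_l| apply Rmin_r]]. }
  specialize (Hc (x + s) (y + s) t).
  rewrite (Hin (x + s) (y + s) t) in Hc by lra.
  replace (x + s - x) with s in Hc by ring. replace (y + s - y) with s in Hc by ring.
  replace (t - t) with 0 in Hc by ring. rewrite Rabs_R0, Rabs_right in Hc by lra.
  rewrite Rminus_0_l, Rabs_Ropp in Hc. lra.
Qed.

Lemma dprop_bound D l a1 b1 a2 b2 a3 b3 : Dprop D -> a1 <= b1 -> a2 <= b2 -> a3 <= b3 ->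
  exists B, 0 <= B /\ forall x y t, a1 <= x <= b1 -> a2 <= y <= b2 -> a3 <= t <= b3 -> Rabs (D l x y t) <= B.
Proof.
  intros HD h1 h2 h3. destruct (box_bound (D l) a1 b1 a2 b2 a3 b3 h1 h2 h3) as [B HB].
  - intros x y t. apply (HD l x y t).
  - exists (Rmax 0 B). split; [apply Rmax_l|]. intros. eapply Rle_trans; [apply HB; auto| apply Rmax_r].
Qed.

Lemma time_lip D x y K1 T s t : Dprop D -> 0 <= s <= t -> t <= T ->
  (forall z, 0 <= z <= T -> Rabs (D (2%nat :: nil) x y z) <= K1) ->
  Rabs (D nil x y t - D nil x y s) <= K1 * (t - s).
Proof.
  intros HD Hs Ht HK. apply (mvt_bound (fun z => D nil x y z) (fun z => D (2%nat :: nil) x y z)); auto.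
  - intros c; apply (HD nil x y c).
  - lra.
  - intros c Hc; apply HK; lra.
Qed.

Lemma time_tay D x y K2 T s t t0 : Dprop D -> 0 <= s <= t -> t <= T -> 0 <= t0 <= T ->
  (forall z, 0 <= z <= T -> Rabs (D (2%nat :: 2%nat :: nil) x y z) <= K2) ->
  Rabs (D nil x y t - D nil x y s - (t - s) * D (2%nat :: nil) x y t0)
    <= K2 * (t - s) * (Rabs (t - t0) + Rabs (s - t0)).
Proof.
  intros HD Hs Ht Ht0 HK.
  destruct (MVT_gen (fun z => D nil x y z) s t (fun z => D (2%nat :: nil) x y z)) as [c [Hc Heq]].
  - intros; apply (HD nil x y x0).
  - intros z _; apply continuity_pt_filterlim.
    apply (ex_derive_continuous (K:=R_AbsRing) (V:=R_NormedModule) (fun z => D nil x y z) z).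
    eexists; apply (HD nil x y z).
  - rewrite Rmin_left in Hc by lra. rewrite Rmax_right in Hc by lra.
    cbv beta in Heq. rewrite Heq.
    replace (D (2%nat :: nil) x y c * (t - s) - (t - s) * D (2%nat :: nil) x y t0)
      with ((t - s) * (D (2%nat :: nil) x y c - D (2%nat :: nil) x y t0)) by ring.
    rewrite Rabs_mult, (Rabs_right (t - s)) by lra.
    assert (Hd : Rabs (D (2%nat :: nil) x y c - D (2%nat :: nil) x y t0) <= K2 * Rabs (c - t0)).
    { destruct (Rle_dec t0 c).
      - rewrite (Rabs_right (c - t0)) by lra.
        apply (mvt_bound (fun z => D (2%nat :: nil) x y z) (fun z => D (2%nat :: 2%nat :: nil) x y z)); auto.
        intros z; apply (HD (2%nat :: nil) x y z). intros z Hz; apply HK; lra.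
      - rewrite (Rabs_left (c - t0)) by lra. rewrite <- Rabs_Ropp.
        replace (- (D (2%nat :: nil) x y c - D (2%nat :: nil) x y t0)) with
          (D (2%nat :: nil) x y t0 - D (2%nat :: nil) x y c) by ring.
        replace (- (c - t0)) with (t0 - c) by ring.
        apply (mvt_bound (fun z => D (2%nat :: nil) x y z) (fun z => D (2%nat :: 2%nat :: nil) x y z)); auto.
        intros z; apply (HD (2%nat :: nil) x y z). lra. intros z Hz; apply HK; lra. }
    assert (Hct : Rabs (c - t0) <= Rabs (t - t0) + Rabs (s - t0)).
    { destruct (Rle_dec t0 c).
      - rewrite (Rabs_right (c - t0)) by lra. rewrite (Rabs_right (t - t0)) by lra.
        pose proof (Rabs_pos (s - t0)); lra.
      - rewrite (Rabs_left (c - t0)) by lra. rewrite (Rabs_left (s - t0)) by lra.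
        pose proof (Rabs_pos (t - t0)); lra. }
    assert (0 <= K2) by (eapply Rle_trans; [apply Rabs_pos| apply (HK t0); lra]).
    replace (K2 * (t - s) * (Rabs (t - t0) + Rabs (s - t0))) with ((t - s) * (K2 * (Rabs (t - t0) + Rabs (s - t0)))) by ring.
    apply Rmult_le_compat_l; [lra|]. eapply Rle_trans; [exact Hd|]. apply Rmult_le_compat_l; auto.
Qed.

Lemma idx_p (phi : R -> R) L M h i : h = L / INR M -> (1 <= M)%nat -> (i < M)%nat -> 0 < L ->
  (forall x, phi (x + L) = phi x) ->
  phi (INR ((i + 1) mod M) * h) = phi (INR i * h + h).
Proof.
  intros Hhd HM Hi HL Hp. subst h.
  assert (HMr : 0 < INR M) by (apply lt_0_INR; lia).
  destruct (Nat.eq_dec (i + 1) M) as [He|Hne].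
  - rewrite He, Nat.Div0.mod_same. simpl (INR 0).
    replace (INR i * (L / INR M) + L / INR M) with (0 + L).
    + rewrite Hp. f_equal. ring.
    + assert (INR i + 1 = INR M) by (rewrite <- He, plus_INR; simpl; ring).
      field_simplify; [|lra]. rewrite <- H. field. lra.
  - rewrite Nat.mod_small by lia. rewrite plus_INR. simpl (INR 1). f_equal. ring.
Qed.

Lemma idx_m (phi : R -> R) L M h i : h = L / INR M -> (1 <= M)%nat -> (i < M)%nat -> 0 < L ->
  (forall x, phi (x + L) = phi x) ->
  phi (INR ((i + M - 1) mod M) * h) = phi (INR i * h - h).
Proof.
  intros Hhd HM Hi HL Hp. subst h.
  assert (HMr : 0 < INR M) by (apply lt_0_INR; lia).
  destruct i as [|i].
  - replace (0 + M - 1)%nat with (M - 1)%nat by lia. rewrite Nat.mod_small by lia.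
    rewrite minus_INR by lia. simpl (INR 1). simpl (INR 0).
    rewrite <- (Hp (0 * (L / INR M) - L / INR M)). f_equal. field. lra.
  - replace (S i + M - 1)%nat with (i + 1 * M)%nat by lia.
    rewrite Nat.Div0.mod_add. rewrite Nat.mod_small by lia. rewrite S_INR. f_equal. ring.
Qed.

Lemma lap_cons D L T M K4 t i j : Dprop D -> 0 < L -> (1 <= M)%nat -> (i < M)%nat -> (j < M)%nat -> 0 <= t <= T ->
  (forall x y t, 0 <= t <= T -> D nil (x + L) y t = D nil x y t /\ D nil x (y + L) t = D nil x y t) ->
  (forall x y t, -L <= x <= 2 * L -> -L <= y <= 2 * L -> 0 <= t <= T ->
      Rabs (D (0%nat :: 0%nat :: 0%nat :: 0%nat :: nil) x y t) <= K4 /\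
      Rabs (D (1%nat :: 1%nat :: 1%nat :: 1%nat :: nil) x y t) <= K4) ->
  let h := L / INR M in
  Rabs (lap_h M h (fun i j => D nil (INR i * h) (INR j * h) t) i j
        - (D (0%nat :: 0%nat :: nil) (INR i * h) (INR j * h) t + D (1%nat :: 1%nat :: nil) (INR i * h) (INR j * h) t))
   <= 4 * K4 * h ^ 2.
Proof.
  intros HD HL HM Hi Hj Ht Hper HK h.
  assert (HMr : 1 <= INR M) by (apply (le_INR 1); lia).
  assert (Hh : 0 < h) by (unfold h; apply Rdiv_lt_0_compat; lra).
  assert (HhL : h <= L).
  { unfold h. apply (Rmult_le_reg_r (INR M)); [lra|]. replace (L / INR M * INR M) with L by (field; lra). nra. }
  assert (Hx : 0 <= INR i * h <= L).
  { split; [apply Rmult_le_pos; [apply pos_INR|lra]|].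
    unfold h. replace (INR i * (L / INR M)) with (L * (INR i / INR M)) by (field; lra).
    assert (INR i / INR M <= 1).
    { apply (Rmult_le_reg_r (INR M)); [lra|]. replace (INR i / INR M * INR M) with (INR i) by (field; lra).
      rewrite Rmult_1_l. apply le_INR; lia. }
    assert (0 <= INR i / INR M) by (apply Rmult_le_pos; [apply pos_INR| left; apply Rinv_0_lt_compat; lra]). nra. }
  assert (Hy : 0 <= INR j * h <= L).
  { split; [apply Rmult_le_pos; [apply pos_INR|lra]|].
    unfold h. replace (INR j * (L / INR M)) with (L * (INR j / INR M)) by (field; lra).
    assert (INR j / INR M <= 1).
    { apply (Rmult_le_reg_r (INR M)); [lra|]. replace (INR j / INR M * INR M) with (INR j) by (field; lra).
      rewrite Rmult_1_l. apply le_INR; lia. }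
    assert (0 <= INR j / INR M) by (apply Rmult_le_pos; [apply pos_INR| left; apply Rinv_0_lt_compat; lra]). nra. }
  unfold lap_h. cbv beta.
  set (x := INR i * h) in *. set (y := INR j * h) in *.
  rewrite (idx_p (fun a => D nil a y t) L M h i eq_refl HM Hi HL) by (intros; apply (Hper _ _ _ Ht)).
  rewrite (idx_m (fun a => D nil a y t) L M h i eq_refl HM Hi HL) by (intros; apply (Hper _ _ _ Ht)).
  rewrite (idx_p (fun a => D nil x a t) L M h j eq_refl HM Hj HL) by (intros; apply (Hper _ _ _ Ht)).
  rewrite (idx_m (fun a => D nil x a t) L M h j eq_refl HM Hj HL) by (intros; apply (Hper _ _ _ Ht)).
  change (INR i * h) with x. change (INR j * h) with y.
  pose proof (taylor4 (fun a => D nil a y t) (fun a => D (0%nat :: nil) a y t) (fun a => D (0%nat :: 0%nat :: nil) a y t)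
     (fun a => D (0%nat :: 0%nat :: 0%nat :: nil) a y t) (fun a => D (0%nat :: 0%nat :: 0%nat :: 0%nat :: nil) a y t) x h K4)
    as T1.
  pose proof (taylor4 (fun a => D nil x a t) (fun a => D (1%nat :: nil) x a t) (fun a => D (1%nat :: 1%nat :: nil) x a t)
     (fun a => D (1%nat :: 1%nat :: 1%nat :: nil) x a t) (fun a => D (1%nat :: 1%nat :: 1%nat :: 1%nat :: nil) x a t) y h K4)
    as T2.
  cbv beta in T1, T2.
  assert (A1 := T1 (fun z => proj1 (HD _ z y t)) (fun z => proj1 (HD _ z y t)) (fun z => proj1 (HD _ z y t))
                  (fun z => proj1 (HD _ z y t)) Hh (fun z Hz => proj1 (HK z y t ltac:(lra) ltac:(lra) Ht))).
  assert (A2 := T2 (fun z => proj1 (proj2 (HD _ x z t))) (fun z => proj1 (proj2 (HD _ x z t)))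
                  (fun z => proj1 (proj2 (HD _ x z t))) (fun z => proj1 (proj2 (HD _ x z t))) Hh
                  (fun z Hz => proj2 (HK x z t ltac:(lra) ltac:(lra) Ht))).
  assert (Hh2 : 0 < h ^ 2) by (apply pow_lt; lra).
  replace ((D nil (x + h) y t + D nil (x - h) y t + D nil x (y + h) t + D nil x (y - h) t - 4 * D nil x y t) / h ^ 2 -
     (D (0%nat :: 0%nat :: nil) x y t + D (1%nat :: 1%nat :: nil) x y t))
   with (((D nil (x + h) y t + D nil (x - h) y t - 2 * D nil x y t - h ^ 2 * D (0%nat :: 0%nat :: nil) x y t)
          + (D nil x (y + h) t + D nil x (y - h) t - 2 * D nil x y t - h ^ 2 * D (1%nat :: 1%nat :: nil) x y t)) / h ^ 2)
   by (field; lra).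
  unfold Rdiv. rewrite Rabs_mult, (Rabs_right (/ h ^ 2)) by (left; apply Rinv_0_lt_compat; lra).
  apply (Rmult_le_reg_r (h ^ 2)); auto.
  rewrite Rmult_assoc, Rinv_l by lra. rewrite Rmult_1_r.
  eapply Rle_trans; [apply Rabs_triang|].
  replace (4 * K4 * h ^ 2 * h ^ 2) with (2 * K4 * h ^ 4 + 2 * K4 * h ^ 4) by ring.
  apply Rplus_le_compat; auto.
Qed.

Lemma D2_ab t (U : nat -> grid) n i j : (1 <= n)%nat -> tau_k t n <> 0 ->
  D2 t U n i j = (1 + 2 * ratio t n) / (tau_k t n * (1 + ratio t n)) * (U n i j - U (n-1)%nat i j)
     - ratio t n ^ 2 / (tau_k t n * (1 + ratio t n)) * (U (n-1)%nat i j - U (n-2)%nat i j).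
Proof.
  intros Hn Ht. destruct n as [|[|n]]; [lia| |].
  - simpl ratio. simpl. field. auto.
  - reflexivity.
Qed.

Lemma time_alg a b tn tp A B g K2 : 0 <= a -> 0 <= b -> a * tn <= 2 -> b * tp <= 1 -> 0 <= tn -> 0 <= tp -> 0 <= K2 ->
  a * tn - b * tp = 1 -> Rabs (A - tn * g) <= K2 * tn * tn ->
  (b = 0 \/ Rabs (B - tp * g) <= K2 * tp * (2 * tn + tp)) ->
  Rabs (a * A - b * B - g) <= 2 * K2 * tn + K2 * (2 * tn + tp).
Proof.
  intros Ha Hb Hat Hbt Htn Htp HK Hid HA HB.
  replace (a * A - b * B - g) with (a * (A - tn * g) - b * (B - tp * g)) by (assert (g = (a * tn - b * tp) * g) by (rewrite Hid; ring); lra).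
  eapply Rle_trans; [apply Rabs_triang|]. rewrite Rabs_Ropp, !Rabs_mult, (Rabs_right a), (Rabs_right b) by lra.
  assert (H1 : a * Rabs (A - tn * g) <= 2 * K2 * tn).
  { eapply Rle_trans; [apply Rmult_le_compat_l; [lra|exact HA]|]. 
    replace (a * (K2 * tn * tn)) with ((a * tn) * (K2 * tn)) by ring.
    replace (2 * K2 * tn) with (2 * (K2 * tn)) by ring. apply Rmult_le_compat_r; [nra|lra]. }
  assert (H2 : b * Rabs (B - tp * g) <= K2 * (2 * tn + tp)).
  { destruct HB as [Hb0|HB]. { subst b. rewrite Rmult_0_l. nra. }
    eapply Rle_trans; [apply Rmult_le_compat_l; [lra|exact HB]|].
    replace (b * (K2 * tp * (2 * tn + tp))) with ((b * tp) * (K2 * (2 * tn + tp))) by ring.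
    replace (K2 * (2 * tn + tp)) with (1 * (K2 * (2 * tn + tp))) at 2 by ring.
    apply Rmult_le_compat_r; [nra|lra]. }
  lra.
Qed.

Definition Psi_f (A eta h s : R) : R := A * s / (1 - eta) * exp (4 * s / (1 - eta)) * h ^ 2.

Lemma Psi_nonneg A eta h s : 0 <= A -> eta < 1 -> 0 <= s -> 0 <= Psi_f A eta h s.
Proof.
  intros. unfold Psi_f. apply Rmult_le_pos; [|apply pow2_ge_0]. apply Rmult_le_pos; [|left; apply exp_pos].
  apply Rmult_le_pos; [nra|left; apply Rinv_0_lt_compat; lra].
Qed.

Lemma Psi_mono A eta h s s' : 0 <= A -> eta < 1 -> 0 <= s <= s' -> Psi_f A eta h s <= Psi_f A eta h s'.
Proof.
  intros HA He Hs. unfold Psi_f. apply Rmult_le_compat_r; [apply pow2_ge_0|].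
  assert (Hi : 0 < / (1 - eta)) by (apply Rinv_0_lt_compat; lra).
  apply Rmult_le_compat.
  - unfold Rdiv; apply Rmult_le_pos; [nra|lra].
  - left; apply exp_pos.
  - unfold Rdiv. apply Rmult_le_compat_r; [lra|]. nra.
  - destruct (Req_dec s s'). subst; lra. left; apply exp_increasing. unfold Rdiv. nra.
Qed.

Lemma Psi_lower A eta h s : 0 <= A -> 0 <= eta < 1 -> 0 <= s -> A * s * h ^ 2 <= Psi_f A eta h s.
Proof.
  intros HA He Hs. unfold Psi_f.
  assert (H1 : 1 <= / (1 - eta)).
  { replace 1 with (/ 1) at 1 by field. apply Rinv_le_contravar; lra. }
  assert (H2 : 1 <= exp (4 * s / (1 - eta))).
  { pose proof (exp_ineq1_le (4 * s / (1 - eta))). assert (0 <= 4 * s / (1 - eta)); [|lra].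
    unfold Rdiv; apply Rmult_le_pos; [lra|]. lra. }
  assert (H0 : 0 <= A * s) by nra.
  assert (A * s <= A * s / (1 - eta)).
  { unfold Rdiv. replace (A * s) with (A * s * 1) at 1 by ring. apply Rmult_le_compat_l; lra. }
  assert (A * s / (1 - eta) <= A * s / (1 - eta) * exp (4 * s / (1 - eta))).
  { replace (A * s / (1 - eta)) with (A * s / (1 - eta) * 1) at 1 by ring. apply Rmult_le_compat_l; [|lra].
    unfold Rdiv; apply Rmult_le_pos; lra. }
  apply Rmult_le_compat_r; [apply pow2_ge_0|]. lra.
Qed.

Lemma rec_ineq A Cx eta h s tau : 0 <= Cx -> 2 * Cx <= A -> 0 <= eta < 1 -> 0 <= s -> 0 < tau ->
  (1 - eta) * Psi_f A eta h s + 2 * tau * (2 * Psi_f A eta h s + Cx * h ^ 2) <= (1 - eta) * Psi_f A eta h (s + tau).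
Proof.
  intros HC HA He Hs Ht.
  set (k := 4 / (1 - eta)).
  assert (Hk : 0 < k) by (unfold k; apply Rdiv_lt_0_compat; lra).
  assert (E : forall r, Psi_f A eta h r = A * r / (1 - eta) * exp (k * r) * h ^ 2).
  { intros r. unfold Psi_f, k. f_equal. f_equal. f_equal. field. lra. }
  rewrite !E.
  assert (Hexp : exp (k * (s + tau)) = exp (k * s) * exp (k * tau)) by (rewrite <- exp_plus; f_equal; ring).
  assert (H1 : 1 + k * tau <= exp (k * tau)) by apply exp_ineq1_le.
  assert (H2 : 1 <= exp (k * (s + tau))).
  { pose proof (exp_ineq1_le (k * (s + tau))). nra. }
  assert (Hes : 0 < exp (k * s)) by apply exp_pos.
  assert (Hh2 : 0 <= h ^ 2) by apply pow2_ge_0.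
  assert (LHS : (1 - eta) * (A * s / (1 - eta) * exp (k * s) * h ^ 2) +
      2 * tau * (2 * (A * s / (1 - eta) * exp (k * s) * h ^ 2) + Cx * h ^ 2)
      = A * s * exp (k * s) * h ^ 2 * (1 + k * tau) + 2 * tau * Cx * h ^ 2).
  { unfold k. field. lra. }
  assert (RHS : (1 - eta) * (A * (s + tau) / (1 - eta) * exp (k * (s + tau)) * h ^ 2)
      = A * s * exp (k * s) * exp (k * tau) * h ^ 2 + A * tau * exp (k * (s + tau)) * h ^ 2).
  { rewrite Hexp. field. lra. }
  rewrite LHS, RHS.
  assert (A * s * exp (k * s) * h ^ 2 * (1 + k * tau) <= A * s * exp (k * s) * exp (k * tau) * h ^ 2).
  { replace (A * s * exp (k * s) * exp (k * tau) * h ^ 2) with (A * s * exp (k * s) * h ^ 2 * exp (k * tau)) by ring.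
    apply Rmult_le_compat_l; auto. apply Rmult_le_pos; auto. apply Rmult_le_pos; [nra|lra]. }
  assert (2 * tau * Cx * h ^ 2 <= A * tau * exp (k * (s + tau)) * h ^ 2).
  { apply Rmult_le_compat_r; auto.
    assert (2 * tau * Cx <= A * tau) by nra.
    assert (0 <= A * tau) by nra.
    assert (A * tau * 1 <= A * tau * exp (k * (s + tau))) by (apply Rmult_le_compat_l; lra). lra. }
  lra.
Qed.

Lemma small_tau A K1 eps tau P : 0 < eps -> 0 <= K1 -> 0 < tau -> 8 * K1 ^ 2 / eps ^ 2 <= A ->
  2 * A * eps ^ 2 * tau ^ 2 <= P -> P < 1/16 -> K1 * tau <= 1/16.
Proof.
  intros He HK Ht HA HP HP2.
  assert (He2 : 0 < eps ^ 2) by (apply pow_lt; lra).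
  assert (8 * K1 ^ 2 <= A * eps ^ 2).
  { apply (Rmult_le_compat_r (eps ^ 2)) in HA; [|lra].
    replace (8 * K1 ^ 2 / eps ^ 2 * eps ^ 2) with (8 * K1 ^ 2) in HA by (field; lra). lra. }
  assert (16 * (K1 * tau) ^ 2 <= P).
  { replace (16 * (K1 * tau) ^ 2) with (2 * (8 * K1 ^ 2) * tau ^ 2) by ring.
    assert (2 * (8 * K1 ^ 2) * tau ^ 2 <= 2 * (A * eps ^ 2) * tau ^ 2).
    { apply Rmult_le_compat_r; [apply pow2_ge_0| lra]. }
    lra. }
  assert ((K1 * tau) ^ 2 < (1/16) ^ 2) by lra.
  assert (0 <= K1 * tau) by nra.
  destruct (Rle_dec (K1 * tau) (1/16)); auto. exfalso. nra.
Qed.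

Lemma ab_rel tn tp : 0 < tn -> 0 < tp ->
  (1 + 2 * (tn / tp)) / (tn * (1 + tn / tp)) * tn - (tn / tp) ^ 2 / (tn * (1 + tn / tp)) * tp = 1 /\
  (tn / tp) ^ 2 / (tn * (1 + tn / tp)) * tp <= 1.
Proof.
  intros H1 H2. assert (Hr : 0 < tn / tp) by (apply Rdiv_lt_0_compat; lra).
  set (r := tn / tp) in *. assert (Htn : tn = r * tp) by (unfold r; field; lra).
  rewrite Htn. split.
  - field. lra.
  - replace (r ^ 2 / (r * tp * (1 + r)) * tp) with (r / (1 + r)) by (field; lra).
    apply (Rmult_le_reg_r (1 + r)); [lra|]. replace (r / (1 + r) * (1 + r)) with r by (field; lra). lra.
Qed.

Lemma tmono (t : nat -> R) N : (forall k, (1 <= k <= N)%nat -> t (k - 1)%nat < t k) ->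
  forall k m, (k <= m)%nat -> (m <= N)%nat -> t k <= t m.
Proof.
  intros H k m. induction m as [|m IH]; intros Hkm HmN.
  - replace k with 0%nat by lia. lra.
  - destruct (Nat.eq_dec k (S m)) as [->|]; [lra|].
    specialize (IH ltac:(lia) ltac:(lia)). specialize (H (S m) ltac:(lia)).
    replace (S m - 1)%nat with m in H by lia. lra.
Qed.

Lemma core_stab a b c eta q G m E ek2 N1 Nk xi Psi Xi :
  a * (m + eta * E) - (a + b) * E + b * ek2 = q * (Nk - 4 * (m + eta * E)) - G * (m + eta * E) + xi ->
  Nk <= 4 * m + eta * N1 -> N1 <= 4 * Psi -> Rabs E <= Psi ->
  (b / eta) * (E - eta * ek2) <= (b / eta) * ((1 - eta) * Psi) ->
  -1 <= G <= 5/2 -> xi <= Xi -> a = c + b / eta -> (1 - eta) * c >= eta * (2 + 4 * q) ->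
  2 <= a -> 0 < eta < 1 -> 0 <= b -> 0 <= q -> 0 <= Psi -> 0 <= Xi ->
  m <= (1 - eta) * Psi + (2 * Psi + Xi) / (a - 1).
Proof.
  intros Heq HN HN1 HE HW HG Hxi Ha Hc Ha2 Het Hb Hq HP HX.
  set (beta := (1 - eta) * c - eta * G - 4 * eta * q).
  assert (Hid : (a + G) * m = ((1 - eta) * c - eta * G) * E + (b / eta) * (E - eta * ek2)
                 + q * (Nk - 4 * (m + eta * E)) + xi).
  { rewrite Ha in Heq |- *. set (B := b / eta) in *.
    assert (Hb' : b = B * eta) by (unfold B; field; lra).
    clearbody B. subst b. lra. }
  assert (H1 : q * (Nk - 4 * (m + eta * E)) <= eta * q * (N1 - 4 * E)).
  { assert (Nk - 4 * (m + eta * E) <= eta * (N1 - 4 * E)) by lra. nra. }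
  assert (Hbeta : beta >= - (eta / 2)) by (unfold beta; nra).
  assert (H2 : beta * E <= (beta + eta) * Psi).
  { assert (Rabs beta <= beta + eta).
    { destruct (Rle_dec 0 beta). rewrite Rabs_right; lra. rewrite Rabs_left; lra. }
    assert (beta * E <= Rabs beta * Rabs E).
    { rewrite <- Rabs_mult. apply Rle_abs. }
    assert (Rabs beta * Rabs E <= (beta + eta) * Psi).
    { apply Rmult_le_compat; auto using Rabs_pos. }
    lra. }
  assert (H3 : eta * q * N1 <= eta * q * (4 * Psi)).
  { apply Rmult_le_compat_l; nra. }
  assert (Hm : (a + G) * m <= (1 - eta) * (a + G) * Psi + 2 * Psi + Xi).
  { rewrite Hid.
    assert (Hsum : ((1 - eta) * c - eta * G) * E + eta * q * (N1 - 4 * E) = beta * E + eta * q * N1)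
      by (unfold beta; ring).
    assert (Hba : (b / eta) * ((1 - eta) * Psi) = (a - c) * (1 - eta) * Psi) by (rewrite Ha; ring).
    assert (Hfin : (beta + eta) * Psi + (a - c) * (1 - eta) * Psi + eta * q * (4 * Psi)
                   = (1 - eta) * (a + G) * Psi + (eta - G) * Psi) by (unfold beta; ring).
    assert ((eta - G) * Psi <= 2 * Psi) by nra.
    lra. }
  assert (HaG : 0 < a + G) by lra.
  assert (Hdiv : m <= (1 - eta) * Psi + (2 * Psi + Xi) / (a + G)).
  { apply (Rmult_le_reg_l (a + G)); auto.
    rewrite Rmult_plus_distr_l. field_simplify; [|lra]. 
    replace ((a + G) * ((1 - eta) * Psi)) with ((1 - eta) * (a + G) * Psi) by ring. 
    lra. }
  eapply Rle_trans; [exact Hdiv|].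
  apply Rplus_le_compat_l. unfold Rdiv. apply Rmult_le_compat_l; [lra|].
  apply Rinv_le_contravar; lra.
Qed.

Lemma core_mp a b c eta q m v U2 N1 Nk :
  a * (m + eta * v) - (a + b) * v + b * U2 = q * (Nk - 4 * (m + eta * v)) - f_ac (m + eta * v) ->
  Nk <= 4 * m + eta * N1 -> N1 <= 4 -> -1 <= v <= 1 ->
  (b / eta) * (v - eta * U2) <= (b / eta) * (1 - eta) ->
  a = c + b / eta -> (1 - eta) * c >= eta * (2 + 4 * q) ->
  2 <= a -> 0 < eta < 1 -> 0 <= b -> 0 <= q ->
  m <= 1 - eta.
Proof.
  intros Heq HN HN1 Hv HW Ha Hc Ha2 Het Hb Hq.
  destruct (Rle_dec m (1 - eta)) as [|Hm]; auto.
  set (s := m + eta * v) in *.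
  assert (Hs : -2 <= s) by (unfold s; nra).
  assert (Hf : f_ac s >= 2 * (s - 1)).
  { unfold f_ac. assert (0 <= (s - 1)^2 * (s + 2)) by (apply Rmult_le_pos; [apply pow2_ge_0|lra]).
    replace (s^3 - s) with ((s-1)^2*(s+2) + 2*(s-1)) by ring. lra. }
  assert (Hid : a * m = (1 - eta) * c * v + (b / eta) * (v - eta * U2) + q * (Nk - 4 * s) - f_ac s).
  { unfold s in *. rewrite Ha in Heq |- *. set (B := b / eta) in *.
    assert (Hb' : b = B * eta) by (unfold B; field; lra).
    clearbody B. subst b. lra. }
  assert (H1 : q * (Nk - 4 * s) <= q * eta * (4 - 4 * v)).
  { assert (eta * N1 <= eta * 4) by (apply Rmult_le_compat_l; lra).
    assert (Nk - 4 * s <= eta * (4 - 4 * v)) by (unfold s; lra). nra. }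
  assert (Hg : ((1 - eta) * c - 4 * q * eta - 2 * eta) * v <= ((1 - eta) * c - 4 * q * eta - 2 * eta)).
  { assert (0 <= (1 - eta) * c - 4 * q * eta - 2 * eta) by lra. nra. }
  assert (Hba : (b / eta) * (1 - eta) = (a - c) * (1 - eta)) by (rewrite Ha; ring).
  assert ((a + 2) * m <= (1 - eta) * (a + 2)).
  { unfold s in *. nra. }
  exfalso. apply Hm. apply (Rmult_le_reg_l (a + 2)); [lra|]. lra.
Qed.

Definition nbs (M : nat) (v : grid) (i j : nat) : R :=
  v ((i + 1) mod M)%nat j + v ((i + M - 1) mod M)%nat j
  + v i ((j + 1) mod M)%nat + v i ((j + M - 1) mod M)%nat.

Lemma lap_nbs M h v i j : lap_h M h v i j = (nbs M v i j - 4 * v i j) / h ^ 2.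
Proof. reflexivity. Qed.

Lemma mod_lt M k : (1 <= M)%nat -> (k mod M < M)%nat.
Proof. intros; apply Nat.mod_upper_bound; lia. Qed.

Lemma nbs_le M (v v' : grid) m c i j : (1 <= M)%nat -> (i < M)%nat -> (j < M)%nat ->
  (forall i j, (i < M)%nat -> (j < M)%nat -> v i j <= m + c * v' i j) ->
  nbs M v i j <= 4 * m + c * nbs M v' i j.
Proof.
  intros HM Hi Hj H. unfold nbs.
  pose proof (H _ _ (mod_lt M (i+1) HM) Hj).
  pose proof (H _ _ (mod_lt M (i+M-1) HM) Hj).
  pose proof (H _ _ Hi (mod_lt M (j+1) HM)).
  pose proof (H _ _ Hi (mod_lt M (j+M-1) HM)).
  lra.
Qed.

Lemma nbs_le0 M (v : grid) m i j : (1 <= M)%nat -> (i < M)%nat -> (j < M)%nat ->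
  (forall i j, (i < M)%nat -> (j < M)%nat -> v i j <= m) -> nbs M v i j <= 4 * m.
Proof.
  intros HM Hi Hj H. pose proof (nbs_le M v v m 0 i j HM Hi Hj) as K.
  assert (nbs M v i j <= 4 * m + 0 * nbs M v i j); [|lra].
  apply K. intros; specialize (H i0 j0 H0 H1); lra.
Qed.

Lemma argmax1 (f : nat -> R) n : exists i0, (i0 <= n)%nat /\ forall i, (i <= n)%nat -> f i <= f i0.
Proof.
  induction n as [|n [i0 [Hi0 H]]].
  - exists 0%nat; split; auto. intros i Hi. replace i with 0%nat by lia. lra.
  - destruct (Rle_dec (f i0) (f (S n))).
    + exists (S n); split; auto. intros i Hi. destruct (Nat.eq_dec i (S n)); [subst; lra|].
      specialize (H i ltac:(lia)); lra.
    + exists i0; split; [lia|]. intros i Hi. destruct (Nat.eq_dec i (S n)); [subst; lra|].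
      apply H; lia.
Qed.

Lemma argmax2 (M : nat) (g : grid) : (1 <= M)%nat ->
  exists i0 j0, (i0 < M)%nat /\ (j0 < M)%nat /\
    forall i j, (i < M)%nat -> (j < M)%nat -> g i j <= g i0 j0.
Proof.
  intros HM.
  assert (A : forall n, exists i0 j0, (i0 <= n)%nat /\ (j0 < M)%nat /\
    forall i j, (i <= n)%nat -> (j < M)%nat -> g i j <= g i0 j0).
  { induction n as [|n [i0 [j0 [Hi0 [Hj0 H]]]]].
    - destruct (argmax1 (g 0%nat) (M - 1)) as [j0 [Hj0 H]].
      exists 0%nat, j0; repeat split; try lia. intros i j Hi Hj. replace i with 0%nat by lia. apply H; lia.
    - destruct (argmax1 (g (S n)) (M - 1)) as [j1 [Hj1 H1]].
      destruct (Rle_dec (g i0 j0) (g (S n) j1)).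
      + exists (S n), j1; repeat split; try lia. intros i j Hi Hj.
        destruct (Nat.eq_dec i (S n)); [subst; apply H1; lia|].
        specialize (H i j ltac:(lia) Hj); lra.
      + exists i0, j0; repeat split; try lia. intros i j Hi Hj.
        destruct (Nat.eq_dec i (S n)); [subst; specialize (H1 j ltac:(lia)); lra|].
        apply H; lia. }
  destruct (A (M - 1)%nat) as [i0 [j0 [Hi0 [Hj0 H]]]].
  exists i0, j0; repeat split; try lia. intros i j Hi Hj; apply H; lia.
Qed.

Lemma grid_mp M h eps eta a b c (Uk Uk1 Uk2 : grid) :
  (1 <= M)%nat -> 0 < h -> a = c + b / eta -> (1 - eta) * c >= eta * (2 + 4 * (eps ^ 2 / h ^ 2)) ->
  2 <= a -> 0 < eta < 1 -> 0 <= b ->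
  (forall i j, (i < M)%nat -> (j < M)%nat -> -1 <= Uk1 i j <= 1) ->
  (b = 0 \/ forall i j, (i < M)%nat -> (j < M)%nat -> Rabs (Uk1 i j - eta * Uk2 i j) <= 1 - eta) ->
  (forall i j, (i < M)%nat -> (j < M)%nat ->
     a * (Uk i j - Uk1 i j) - b * (Uk1 i j - Uk2 i j) = eps ^ 2 * lap_h M h Uk i j - f_ac (Uk i j)) ->
  forall i j, (i < M)%nat -> (j < M)%nat -> Uk i j - eta * Uk1 i j <= 1 - eta.
Proof.
  intros HM Hh Ha Hc Ha2 Het Hb HU1 HW Heq.
  destruct (argmax2 M (fun i j => Uk i j - eta * Uk1 i j) HM) as [i0 [j0 [Hi0 [Hj0 Hmax]]]].
  intros i j Hi Hj. eapply Rle_trans; [apply Hmax; auto|].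
  assert (Hq : 0 <= eps ^ 2 / h ^ 2).
  { unfold Rdiv; apply Rmult_le_pos; [apply pow2_ge_0|]. left; apply Rinv_0_lt_compat; apply pow_lt; lra. }
  apply (core_mp a b c eta (eps ^ 2 / h ^ 2) (Uk i0 j0 - eta * Uk1 i0 j0) (Uk1 i0 j0) (Uk2 i0 j0)
           (nbs M Uk1 i0 j0) (nbs M Uk i0 j0)); auto.
  - replace (Uk i0 j0 - eta * Uk1 i0 j0 + eta * Uk1 i0 j0) with (Uk i0 j0) by ring.
    specialize (Heq i0 j0 Hi0 Hj0). rewrite lap_nbs in Heq.
    assert (h ^ 2 <> 0) by (apply pow_nonzero; lra).
    replace (eps ^ 2 / h ^ 2 * (nbs M Uk i0 j0 - 4 * Uk i0 j0)) with
      (eps ^ 2 * ((nbs M Uk i0 j0 - 4 * Uk i0 j0) / h ^ 2)) by (field; lra).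
    rewrite <- Heq. ring.
  - apply nbs_le; auto. intros i' j' Hi' Hj'.
    specialize (Hmax i' j' Hi' Hj'). simpl in Hmax. lra.
  - assert (nbs M Uk1 i0 j0 <= 4 * 1); [|lra]. apply nbs_le0; auto. intros i' j' Hi' Hj'. apply HU1; auto.
  - destruct HW as [Hb0|HW].
    + subst b. unfold Rdiv. rewrite !Rmult_0_l. lra.
    + apply Rmult_le_compat_l. unfold Rdiv; apply Rmult_le_pos; [lra|left; apply Rinv_0_lt_compat; lra].
      specialize (HW i0 j0 Hi0 Hj0). pose proof (Rle_abs (Uk1 i0 j0 - eta * Uk2 i0 j0)). lra.
Qed.

Lemma lap_opp M h (v : grid) i j : lap_h M h (fun i j => - v i j) i j = - lap_h M h v i j.
Proof. unfold lap_h, Rdiv. ring. Qed.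

Lemma lap_sub M h (v w : grid) i j :
  lap_h M h (fun i j => v i j - w i j) i j = lap_h M h v i j - lap_h M h w i j.
Proof. unfold lap_h, Rdiv. ring. Qed.

Lemma f_ac_opp x : f_ac (- x) = - f_ac x.
Proof. unfold f_ac; ring. Qed.

Lemma grid_mp_abs M h eps eta a b c (Uk Uk1 Uk2 : grid) :
  (1 <= M)%nat -> 0 < h -> a = c + b / eta -> (1 - eta) * c >= eta * (2 + 4 * (eps ^ 2 / h ^ 2)) ->
  2 <= a -> 0 < eta < 1 -> 0 <= b ->
  (forall i j, (i < M)%nat -> (j < M)%nat -> -1 <= Uk1 i j <= 1) ->
  (b = 0 \/ forall i j, (i < M)%nat -> (j < M)%nat -> Rabs (Uk1 i j - eta * Uk2 i j) <= 1 - eta) ->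
  (forall i j, (i < M)%nat -> (j < M)%nat ->
     a * (Uk i j - Uk1 i j) - b * (Uk1 i j - Uk2 i j) = eps ^ 2 * lap_h M h Uk i j - f_ac (Uk i j)) ->
  forall i j, (i < M)%nat -> (j < M)%nat ->
    Rabs (Uk i j - eta * Uk1 i j) <= 1 - eta /\ -1 <= Uk i j <= 1.
Proof.
  intros HM Hh Ha Hc Ha2 Het Hb HU1 HW Heq i j Hi Hj.
  pose proof (grid_mp M h eps eta a b c Uk Uk1 Uk2 HM Hh Ha Hc Ha2 Het Hb HU1 HW Heq i j Hi Hj) as H1.
  pose proof (grid_mp M h eps eta a b c (fun i j => - Uk i j) (fun i j => - Uk1 i j) (fun i j => - Uk2 i j)
     HM Hh Ha Hc Ha2 Het Hb) as H2.
  assert (H2' : - Uk i j - eta * - Uk1 i j <= 1 - eta).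
  { apply H2; auto.
    - intros i' j' Hi' Hj'. specialize (HU1 i' j' Hi' Hj'). lra.
    - destruct HW as [HW|HW]; [left; auto| right]. intros i' j' Hi' Hj'.
      specialize (HW i' j' Hi' Hj'). replace (- Uk1 i' j' - eta * - Uk2 i' j') with (- (Uk1 i' j' - eta * Uk2 i' j')) by ring.
      rewrite Rabs_Ropp; auto.
    - intros i' j' Hi' Hj'. rewrite lap_opp, f_ac_opp. specialize (Heq i' j' Hi' Hj'). lra. }
  specialize (HU1 i j Hi Hj).
  assert (eta * Uk1 i j <= eta) by nra. assert (- eta <= eta * Uk1 i j) by nra.
  split; [apply Rabs_le; lra|]. lra.
Qed.

Lemma grid_stab1 M h eps eta a b c Psi Xi (ek ek1 ek2 G xi : grid) :
  (1 <= M)%nat -> 0 < h -> a = c + b / eta -> (1 - eta) * c >= eta * (2 + 4 * (eps ^ 2 / h ^ 2)) ->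
  2 <= a -> 0 < eta < 1 -> 0 <= b -> 0 <= Psi -> 0 <= Xi ->
  (forall i j, (i < M)%nat -> (j < M)%nat -> Rabs (ek1 i j) <= Psi) ->
  (b = 0 \/ forall i j, (i < M)%nat -> (j < M)%nat -> Rabs (ek1 i j - eta * ek2 i j) <= (1 - eta) * Psi) ->
  (forall i j, (i < M)%nat -> (j < M)%nat -> -1 <= G i j <= 5/2) ->
  (forall i j, (i < M)%nat -> (j < M)%nat -> Rabs (xi i j) <= Xi) ->
  (forall i j, (i < M)%nat -> (j < M)%nat ->
     a * (ek i j - ek1 i j) - b * (ek1 i j - ek2 i j) = eps ^ 2 * lap_h M h ek i j - G i j * ek i j + xi i j) ->
  forall i j, (i < M)%nat -> (j < M)%nat -> ek i j - eta * ek1 i j <= (1 - eta) * Psi + (2 * Psi + Xi) / (a - 1).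
Proof.
  intros HM Hh Ha Hc Ha2 Het Hb HP HX HE1 HW HG Hxi Heq.
  destruct (argmax2 M (fun i j => ek i j - eta * ek1 i j) HM) as [i0 [j0 [Hi0 [Hj0 Hmax]]]].
  intros i j Hi Hj. eapply Rle_trans; [apply Hmax; auto|].
  assert (Hq : 0 <= eps ^ 2 / h ^ 2).
  { unfold Rdiv; apply Rmult_le_pos; [apply pow2_ge_0|]. left; apply Rinv_0_lt_compat; apply pow_lt; lra. }
  apply (core_stab a b c eta (eps ^ 2 / h ^ 2) (G i0 j0) (ek i0 j0 - eta * ek1 i0 j0) (ek1 i0 j0) (ek2 i0 j0)
           (nbs M ek1 i0 j0) (nbs M ek i0 j0) (xi i0 j0) Psi Xi); auto.
  - replace (ek i0 j0 - eta * ek1 i0 j0 + eta * ek1 i0 j0) with (ek i0 j0) by ring.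
    specialize (Heq i0 j0 Hi0 Hj0). rewrite lap_nbs in Heq.
    replace (eps ^ 2 / h ^ 2 * (nbs M ek i0 j0 - 4 * ek i0 j0)) with
      (eps ^ 2 * ((nbs M ek i0 j0 - 4 * ek i0 j0) / h ^ 2)) by (field; lra).
    lra.
  - apply nbs_le; auto. intros i' j' Hi' Hj'.
    specialize (Hmax i' j' Hi' Hj'). simpl in Hmax. lra.
  - apply nbs_le0; auto. intros i' j' Hi' Hj'. specialize (HE1 i' j' Hi' Hj').
    pose proof (Rle_abs (ek1 i' j')). lra.
  - destruct HW as [Hb0|HW].
    + subst b. unfold Rdiv. rewrite !Rmult_0_l. lra.
    + apply Rmult_le_compat_l. unfold Rdiv; apply Rmult_le_pos; [lra|left; apply Rinv_0_lt_compat; lra].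
      specialize (HW i0 j0 Hi0 Hj0). pose proof (Rle_abs (ek1 i0 j0 - eta * ek2 i0 j0)). lra.
  - specialize (Hxi i0 j0 Hi0 Hj0). pose proof (Rle_abs (xi i0 j0)). lra.
Qed.

Lemma grid_stab M h eps eta a b c Psi Xi (ek ek1 ek2 G xi : grid) :
  (1 <= M)%nat -> 0 < h -> a = c + b / eta -> (1 - eta) * c >= eta * (2 + 4 * (eps ^ 2 / h ^ 2)) ->
  2 <= a -> 0 < eta < 1 -> 0 <= b -> 0 <= Psi -> 0 <= Xi ->
  (forall i j, (i < M)%nat -> (j < M)%nat -> Rabs (ek1 i j) <= Psi) ->
  (b = 0 \/ forall i j, (i < M)%nat -> (j < M)%nat -> Rabs (ek1 i j - eta * ek2 i j) <= (1 - eta) * Psi) ->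
  (forall i j, (i < M)%nat -> (j < M)%nat -> -1 <= G i j <= 5/2) ->
  (forall i j, (i < M)%nat -> (j < M)%nat -> Rabs (xi i j) <= Xi) ->
  (forall i j, (i < M)%nat -> (j < M)%nat ->
     a * (ek i j - ek1 i j) - b * (ek1 i j - ek2 i j) = eps ^ 2 * lap_h M h ek i j - G i j * ek i j + xi i j) ->
  forall i j, (i < M)%nat -> (j < M)%nat ->
    Rabs (ek i j - eta * ek1 i j) <= (1 - eta) * Psi + (2 * Psi + Xi) / (a - 1).
Proof.
  intros HM Hh Ha Hc Ha2 Het Hb HP HX HE1 HW HG Hxi Heq i j Hi Hj.
  pose proof (grid_stab1 M h eps eta a b c Psi Xi ek ek1 ek2 G xi HM Hh Ha Hc Ha2 Het Hb HP HX HE1 HW HG Hxi Heq i j Hi Hj) as H1.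
  assert (H2 : - ek i j - eta * - ek1 i j <= (1 - eta) * Psi + (2 * Psi + Xi) / (a - 1)).
  { apply (grid_stab1 M h eps eta a b c Psi Xi (fun i j => - ek i j) (fun i j => - ek1 i j) (fun i j => - ek2 i j) G
            (fun i j => - xi i j)); auto.
    - intros i' j' Hi' Hj'. rewrite Rabs_Ropp; auto.
    - destruct HW as [HW|HW]; [left; auto| right]. intros i' j' Hi' Hj'.
      specialize (HW i' j' Hi' Hj'). replace (- ek1 i' j' - eta * - ek2 i' j') with (- (ek1 i' j' - eta * ek2 i' j')) by ring.
      rewrite Rabs_Ropp; auto.
    - intros i' j' Hi' Hj'. rewrite Rabs_Ropp; auto.
    - intros i' j' Hi' Hj'. rewrite lap_opp. specialize (Heq i' j' Hi' Hj'). lra. }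
  apply Rabs_le; lra.
Qed.

Lemma step_coef tau r eta q :
  0 < tau -> 0 <= r -> 1/2 <= eta < 1 -> 0 <= q ->
  tau <= ((1 + 2 * r) * eta - r ^ 2) / (eta ^ 2 * (1 + r)) * ((1 - eta) / (2 + 4 * q)) ->
  (1 - eta) * ((1 + 2 * r) / (tau * (1 + r)) - (r ^ 2 / (tau * (1 + r))) / eta) >= eta * (2 + 4 * q) /\
  2 <= (1 + 2 * r) / (tau * (1 + r)) /\ 0 <= r ^ 2 / (tau * (1 + r)) /\
  1 / tau <= (1 + 2 * r) / (tau * (1 + r)) /\ (1 + 2 * r) / (tau * (1 + r)) * tau <= 2 /\
  tau * (2 + 4 * q) <= 2.
Proof.
  intros Ht Hr He Hq H.
  set (X := ((1 + 2 * r) * eta - r ^ 2) / (eta ^ 2 * (1 + r))) in *.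
  assert (HK : 0 < 2 + 4 * q) by lra.
  assert (HY : 0 < (1 - eta) / (2 + 4 * q)) by (apply Rdiv_lt_0_compat; lra).
  assert (HX : 0 < X).
  { destruct (Rle_dec X 0); [|lra]. assert (X * ((1 - eta) / (2 + 4 * q)) <= 0); [|lra].
    assert (0 <= - X) by lra. assert (0 <= - X * ((1 - eta) / (2 + 4 * q))) by (apply Rmult_le_pos; lra). lra. }
  assert (H2 : tau * (2 + 4 * q) <= X * (1 - eta)).
  { apply (Rmult_le_compat_r (2 + 4 * q)) in H; [|lra].
    replace (X * ((1 - eta) / (2 + 4 * q)) * (2 + 4 * q)) with (X * (1 - eta)) in H by (field; lra). lra. }
  assert (Hc : (1 + 2 * r) / (tau * (1 + r)) - (r ^ 2 / (tau * (1 + r))) / eta = X * eta / tau).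
  { unfold X. field. repeat split; lra. }
  assert (HXle : X <= 2 / eta).
  { unfold X. apply (Rmult_le_reg_r (eta ^ 2 * (1 + r))); [apply Rmult_lt_0_compat; [apply pow_lt|]; lra|].
    replace (((1 + 2 * r) * eta - r ^ 2) / (eta ^ 2 * (1 + r)) * (eta ^ 2 * (1 + r)))
      with ((1 + 2 * r) * eta - r ^ 2) by (field; lra).
    replace (2 / eta * (eta ^ 2 * (1 + r))) with (2 * eta * (1 + r)) by (field; lra).
    nra. }
  assert (Hc2 : (1 - eta) * (X * eta / tau) >= eta * (2 + 4 * q)).
  { apply Rle_ge. apply (Rmult_le_reg_r tau); auto.
    replace ((1 - eta) * (X * eta / tau) * tau) with (eta * (X * (1 - eta))) by (field; lra).
    replace (eta * (2 + 4 * q) * tau) with (eta * (tau * (2 + 4 * q))) by ring.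
    apply Rmult_le_compat_l; lra. }
  assert (Hab : 1 / tau <= (1 + 2 * r) / (tau * (1 + r))).
  { apply (Rmult_le_reg_r (tau * (1 + r))); [nra|].
    replace (1 / tau * (tau * (1 + r))) with (1 + r) by (field; lra).
    replace ((1 + 2 * r) / (tau * (1 + r)) * (tau * (1 + r))) with (1 + 2 * r) by (field; lra). lra. }
  assert (Hb : 0 <= r ^ 2 / (tau * (1 + r))).
  { apply Rmult_le_pos; [nra|]. left; apply Rinv_0_lt_compat; nra. }
  rewrite Hc. repeat split; auto.
  - assert (Hcb : 2 <= X * eta / tau).
    { assert (X * eta / tau >= eta * (2 + 4 * q) / (1 - eta)).
      { apply Rle_ge. apply (Rmult_le_reg_r (1 - eta)); [lra|].
        replace (eta * (2 + 4 * q) / (1 - eta) * (1 - eta)) with (eta * (2 + 4 * q)) by (field; lra). lra. }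
      assert (eta * (2 + 4 * q) / (1 - eta) >= 2); [|lra].
      apply Rle_ge. apply (Rmult_le_reg_r (1 - eta)); [lra|].
      replace (eta * (2 + 4 * q) / (1 - eta) * (1 - eta)) with (eta * (2 + 4 * q)) by (field; lra). nra. }
    assert (X * eta / tau <= (1 + 2 * r) / (tau * (1 + r))); [|lra].
    rewrite <- Hc. assert (0 <= r ^ 2 / (tau * (1 + r)) / eta) by (apply Rmult_le_pos; [auto|left; apply Rinv_0_lt_compat; lra]). lra.
  - replace ((1 + 2 * r) / (tau * (1 + r)) * tau) with ((1 + 2 * r) / (1 + r)) by (field; lra).
    apply (Rmult_le_reg_r (1 + r)); [lra|]. replace ((1 + 2 * r) / (1 + r) * (1 + r)) with (1 + 2 * r) by (field; lra). lra.
  - assert (X * (1 - eta) <= 2 / eta * (1 - eta)) by (apply Rmult_le_compat_r; lra).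
    assert (2 / eta * (1 - eta) <= 2); [|lra].
    apply (Rmult_le_reg_r eta); [lra|]. replace (2 / eta * (1 - eta) * eta) with (2 * (1 - eta)) by (field; lra). lra.
Qed.

Theorem theorem5p1 :
  forall (L eps T : R) (u : R -> R -> R -> R),
    0 < L -> 0 < eps -> 0 < T ->
    smooth3 u ->
    (forall x y t, 0 <= t <= T -> u (x + L) y t = u x y t /\ u x (y + L) t = u x y t) ->
    (forall x y t, 0 < x < L -> 0 < y < L -> 0 < t <= T ->
       dt u x y t = eps ^ 2 * (dxx u x y t + dyy u x y t) - f_ac (u x y t)) ->
    (forall x y, Rabs (u x y 0) <= 1) ->
    exists Cu : R,
      forall (M N : nat) (t : nat -> R) (rs : R) (U : nat -> grid),
        (1 <= M)%nat -> (1 <= N)%nat ->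
        let h := L / INR M in
        t 0%nat = 0 -> t N = T ->
        (forall k, (1 <= k <= N)%nat -> t (k - 1)%nat < t k) ->
        1 <= rs < 1 + sqrt 2 ->
        (forall k, (2 <= k <= N)%nat -> 0 < ratio t k <= rs) ->
        let eta := 2 * rs ^ 2 / (1 + rs) ^ 2 in
        (forall n, (1 <= n <= N)%nat ->
           tau_k t n <= ((1 + 2 * ratio t n) * eta - ratio t n ^ 2)
                        / (eta ^ 2 * (1 + ratio t n))
                        * ((1 - eta) / (2 + 4 * eps ^ 2 / h ^ 2))) ->
        (forall i j, (i < M)%nat -> (j < M)%nat ->
           U 0%nat i j = u (INR i * h) (INR j * h) 0) ->
        (forall n i j, (1 <= n <= N)%nat -> (i < M)%nat -> (j < M)%nat ->
           D2 t U n i j = eps ^ 2 * lap_h M h (U n) i j - f_ac (U n i j)) ->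
        forall n, (1 <= n <= N)%nat ->
          forall i j, (i < M)%nat -> (j < M)%nat ->
            Rabs (u (INR i * h) (INR j * h) (t n) - U n i j)
            <= Cu * t n / (1 - eta) * exp (4 * t n / (1 - eta))
               * (tau_max t N ^ 2 + h ^ 2).
Proof.
  intros L eps T u HL He HT Hsm Hper Hpde Hu0.
  destruct Hsm as [D [HDn HD]].
  assert (HDp : Dprop D) by exact HD. clear HD. subst u.
  destruct (dprop_bound D nil 0 L 0 L 0 T HDp) as [K0 [HK0 HB0]]; try lra.
  destruct (dprop_bound D (2%nat :: nil) 0 L 0 L 0 T HDp) as [K1 [HK1 HB1]]; try lra.
  destruct (dprop_bound D (2%nat :: 2%nat :: nil) 0 L 0 L 0 T HDp) as [K2 [HK2 HB2]]; try lra.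
  destruct (dprop_bound D (0%nat :: 0%nat :: 0%nat :: 0%nat :: nil) (-L) (2*L) (-L) (2*L) 0 T HDp) as [K4a [HK4a HB4a]]; try lra.
  destruct (dprop_bound D (1%nat :: 1%nat :: 1%nat :: 1%nat :: nil) (-L) (2*L) (-L) (2*L) 0 T HDp) as [K4b [HK4b HB4b]]; try lra.
  set (K4 := Rmax K4a K4b).
  assert (HB4 : forall x y t, -L <= x <= 2 * L -> -L <= y <= 2 * L -> 0 <= t <= T ->
      Rabs (D (0%nat :: 0%nat :: 0%nat :: 0%nat :: nil) x y t) <= K4 /\
      Rabs (D (1%nat :: 1%nat :: 1%nat :: 1%nat :: nil) x y t) <= K4).
  { intros x y t hx hy ht. split.
    - eapply Rle_trans; [apply HB4a; auto| apply Rmax_l].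
    - eapply Rle_trans; [apply HB4b; auto| apply Rmax_r]. }
  assert (HK4 : 0 <= K4) by (unfold K4; eapply Rle_trans; [exact HK4a| apply Rmax_l]).
  assert (He2 : 0 < eps ^ 2) by (apply pow_lt; lra).
  set (Cx := 3 * K2 / eps ^ 2 + 4 * eps ^ 2 * K4).
  assert (HCx : 0 <= Cx).
  { unfold Cx. assert (0 <= 3 * K2 / eps ^ 2) by (apply Rmult_le_pos; [lra| left; apply Rinv_0_lt_compat; lra]).
    assert (0 <= eps ^ 2 * K4) by (apply Rmult_le_pos; lra). lra. }
  set (A := 2 * Cx + 8 * K1 ^ 2 / eps ^ 2).
  assert (HA1 : 2 * Cx <= A).
  { unfold A. assert (0 <= 8 * K1 ^ 2 / eps ^ 2) by (apply Rmult_le_pos; [nra| left; apply Rinv_0_lt_compat; lra]). lra. }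
  assert (HA2 : 8 * K1 ^ 2 / eps ^ 2 <= A) by (unfold A; lra).
  assert (HA0 : 0 <= A) by lra.
  exists (16 * A * (K0 + 1)).
  intros M N t rs U HM HN h Ht0 HtN Hmono Hrs Hratio eta Hstep Hinit Hscheme.
  assert (HMr : 1 <= INR M) by (apply (le_INR 1); lia).
  assert (Hh : 0 < h) by (unfold h; apply Rdiv_lt_0_compat; lra).
  assert (Hh2 : 0 < h ^ 2) by (apply pow_lt; lra).
  assert (Heta : 1/2 <= eta < 1).
  { assert (Hs2 : sqrt 2 * sqrt 2 = 2) by (apply sqrt_sqrt; lra).
    assert (Hsp : 0 <= sqrt 2) by apply sqrt_pos.
    assert (Hp : 0 < (1 + rs) ^ 2) by (apply pow_lt; lra).
    unfold eta. split.
    - apply (Rmult_le_reg_r ((1 + rs) ^ 2)); auto. replace (2 * rs ^ 2 / (1 + rs) ^ 2 * (1 + rs) ^ 2) with (2 * rs ^ 2) by (field; lra). nra.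
    - apply (Rmult_lt_reg_r ((1 + rs) ^ 2)); auto. replace (2 * rs ^ 2 / (1 + rs) ^ 2 * (1 + rs) ^ 2) with (2 * rs ^ 2) by (field; lra).
      assert ((rs - 1) * (rs - 1) < sqrt 2 * sqrt 2).
      { apply Rmult_le_0_lt_compat; lra. }
      nra. }
  clearbody eta.
  set (q := eps ^ 2 / h ^ 2).
  assert (Hq : 0 <= q) by (unfold q; apply Rmult_le_pos; [lra| left; apply Rinv_0_lt_compat; lra]).
  assert (Htk : forall k, (k <= N)%nat -> 0 <= t k <= T).
  { intros k Hk. split.
    - rewrite <- Ht0. apply (tmono t N Hmono); lia.
    - rewrite <- HtN. apply (tmono t N Hmono); lia. }
  assert (Htau : forall k, (1 <= k <= N)%nat -> 0 < tau_k t k).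
  { intros k Hk. unfold tau_k. specialize (Hmono k Hk). lra. }
  assert (Htau_le : forall k n, (1 <= k)%nat -> (k <= n)%nat -> (n <= N)%nat -> tau_k t k <= t n).
  { intros k n H1 H2 H3. unfold tau_k.
    assert (0 <= t (k - 1)%nat) by (apply Htk; lia).
    assert (t k <= t n) by (apply (tmono t N Hmono); lia). lra. }
  assert (Hratio0 : forall n, (1 <= n <= N)%nat -> 0 <= ratio t n).
  { intros n Hn. destruct n as [|[|n']]; [lia| simpl; lra|]. specialize (Hratio (S (S n')) ltac:(lia)). lra. }
  set (a := fun n => (1 + 2 * ratio t n) / (tau_k t n * (1 + ratio t n))).
  set (b := fun n => ratio t n ^ 2 / (tau_k t n * (1 + ratio t n))).
  set (c := fun n => a n - b n / eta).
  assert (Hcoef : forall n, (1 <= n <= N)%nat ->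
     (1 - eta) * c n >= eta * (2 + 4 * q) /\ 2 <= a n /\ 0 <= b n /\ 1 / tau_k t n <= a n /\
     a n * tau_k t n <= 2 /\ tau_k t n * (2 + 4 * q) <= 2).
  { intros n Hn. unfold c, a, b.
    apply step_coef; auto; try lra.
    specialize (Hstep n Hn). replace (4 * eps ^ 2 / h ^ 2) with (4 * q) in Hstep by (unfold q; field; lra).
    exact Hstep. }
  assert (Htauh : forall n, (1 <= n <= N)%nat -> tau_k t n <= h ^ 2 / (2 * eps ^ 2)).
  { intros n Hn. destruct (Hcoef n Hn) as [_ [_ [_ [_ [_ H]]]]].
    assert (tau_k t n * q <= 1/2) by (pose proof (Htau n Hn); nra).
    unfold q in H0. apply (Rmult_le_reg_r (2 * eps ^ 2)); [lra|].
    replace (h ^ 2 / (2 * eps ^ 2) * (2 * eps ^ 2)) with (h ^ 2) by (field; lra).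
    apply (Rmult_le_compat_r (h ^ 2)) in H0; [|lra].
    replace (tau_k t n * (eps ^ 2 / h ^ 2) * h ^ 2) with (tau_k t n * eps ^ 2) in H0 by (field; lra). lra. }
  assert (Hb1 : b 1%nat = 0) by (unfold b; simpl; unfold Rdiv; ring).
  assert (Hab : forall n, (1 <= n <= N)%nat -> a n = c n + b n / eta) by (intros; unfold c; ring).
  assert (HD2 : forall (V : nat -> grid) n i j, (1 <= n <= N)%nat ->
     D2 t V n i j = a n * (V n i j - V (n - 1)%nat i j) - b n * (V (n - 1)%nat i j - V (n - 2)%nat i j)).
  { intros V n i j Hn. unfold a, b. apply D2_ab; [lia|]. pose proof (Htau n Hn); lra. }
  assert (HMP : forall n, (n <= N)%nat ->
     (forall i j, (i < M)%nat -> (j < M)%nat -> -1 <= U n i j <= 1) /\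
     ((1 <= n)%nat -> forall i j, (i < M)%nat -> (j < M)%nat -> Rabs (U n i j - eta * U (n - 1)%nat i j) <= 1 - eta)).
  { induction n as [|n IH]; intros HnN.
    - split; [|lia]. intros i j Hi Hj. rewrite Hinit by auto. specialize (Hu0 (INR i * h) (INR j * h)).
      apply Rabs_le_between in Hu0. lra.
    - destruct (IH ltac:(lia)) as [IH1 IH2].
      assert (Hn : (1 <= S n <= N)%nat) by lia.
      destruct (Hcoef (S n) Hn) as [Hc1 [Hc2 [Hc3 _]]].
      assert (Hall := grid_mp_abs M h eps eta (a (S n)) (b (S n)) (c (S n)) (U (S n)) (U n) (U (n - 1)%nat)
                 HM Hh (Hab _ Hn) Hc1 Hc2 ltac:(lra) Hc3 IH1).
      assert (HW : b (S n) = 0 \/ forall i j, (i < M)%nat -> (j < M)%nat -> Rabs (U n i j - eta * U (n - 1)%nat i j) <= 1 - eta).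
      { destruct n as [|n']; [left; exact Hb1| right; apply IH2; lia]. }
      specialize (Hall HW).
      assert (Heq : forall i j, (i < M)%nat -> (j < M)%nat ->
           a (S n) * (U (S n) i j - U n i j) - b (S n) * (U n i j - U (n - 1)%nat i j) =
           eps ^ 2 * lap_h M h (U (S n)) i j - f_ac (U (S n) i j)).
      { intros i j Hi Hj. rewrite <- Hscheme by auto. rewrite HD2 by auto.
        replace (S n - 1)%nat with n by lia. replace (S n - 2)%nat with (n - 1)%nat by lia. reflexivity. }
      specialize (Hall Heq).
      split.
      + intros i j Hi Hj. apply (Hall i j Hi Hj).
      + intros _ i j Hi Hj. replace (S n - 1)%nat with n by lia. apply (Hall i j Hi Hj). }
  assert (Hgrid : forall i, (i < M)%nat -> 0 <= INR i * h < L).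
  { intros i Hi. split; [apply Rmult_le_pos; [apply pos_INR|lra]|].
    unfold h. replace (INR i * (L / INR M)) with (L * (INR i / INR M)) by (field; lra).
    assert (INR i / INR M < 1).
    { apply (Rmult_lt_reg_r (INR M)); [lra|]. replace (INR i / INR M * INR M) with (INR i) by (field; lra).
      rewrite Rmult_1_l. apply lt_INR; lia. }
    nra. }
  assert (Htpos : forall n, (1 <= n <= N)%nat -> 0 < t n).
  { intros n Hn. pose proof (Hmono 1%nat ltac:(lia)). simpl in H. rewrite Ht0 in H.
    assert (t 1%nat <= t n) by (apply (tmono t N Hmono); lia). lra. }
  set (ug := fun k i j => D nil (INR i * h) (INR j * h) (t k)).
  set (xi := fun n i j => D2 t ug n i j - eps ^ 2 * lap_h M h (ug n) i j + f_ac (ug n i j)).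
  assert (Hrat2 : forall n, (2 <= n)%nat -> ratio t n = tau_k t n / tau_k t (n - 1)%nat).
  { intros n Hn. destruct n as [|[|n']]; [lia|lia|reflexivity]. }
  assert (Hxi : forall n, (1 <= n <= N)%nat -> forall i j, (i < M)%nat -> (j < M)%nat -> Rabs (xi n i j) <= Cx * h ^ 2).
  { intros n Hn i j Hi Hj.
    pose proof (Hgrid i Hi) as Hx. pose proof (Hgrid j Hj) as Hy.
    set (x := INR i * h) in *. set (y := INR j * h) in *.
    assert (Htn : 0 <= t n <= T) by (apply Htk; lia).
    assert (HPF := pde_closed D L eps T HDp HL Hpde x y (t n) Hx Hy ltac:(pose proof (Htpos n Hn); lra)).
    assert (Hlap := lap_cons D L T M K4 (t n) i j HDp HL HM Hi Hj Htn Hper HB4). cbv zeta in Hlap.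
    fold h in Hlap. fold x y in Hlap.
    set (g := D (2%nat :: nil) x y (t n)).
    assert (HK2xy : forall z, 0 <= z <= T -> Rabs (D (2%nat :: 2%nat :: nil) x y z) <= K2).
    { intros z Hz. apply HB2; lra. }
    assert (Ht1 : 0 <= t (n - 1)%nat <= t n) by (split; [apply Htk; lia| apply (tmono t N Hmono); lia]).
    assert (Htime : Rabs (D2 t ug n i j - g) <= 5 * K2 * (h ^ 2 / (2 * eps ^ 2))).
    { rewrite HD2 by auto. unfold ug. fold x y.
      destruct (Hcoef n Hn) as [_ [Ha2 [Hb0 [_ [Hat _]]]]].
      assert (Htn_pos := Htau n Hn).
      assert (HA : Rabs (D nil x y (t n) - D nil x y (t (n - 1)%nat) - tau_k t n * g) <= K2 * tau_k t n * tau_k t n).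
      { pose proof (time_tay D x y K2 T (t (n - 1)%nat) (t n) (t n) HDp Ht1 (proj2 Htn) Htn HK2xy) as H.
        unfold tau_k. fold g in H. replace (t n - t n) with 0 in H by ring. rewrite Rabs_R0 in H.
        rewrite (Rabs_minus_sym (t (n - 1)%nat) (t n)) in H. rewrite (Rabs_right (t n - t (n - 1)%nat)) in H by lra. lra. }
      destruct (Nat.eq_dec n 1) as [Hn1|Hn1].
      - subst n. rewrite Hb1.
        assert (Hp0 : tau_k t 0 = 0) by (unfold tau_k; simpl; ring).
        eapply Rle_trans.
        + apply (time_alg (a 1%nat) 0 (tau_k t 1) (tau_k t 0) _ _ g K2); auto; try lra.
          * unfold a. simpl ratio. field. lra.
        + rewrite Hp0. pose proof (Htauh 1%nat Hn).
          assert (0 <= h ^ 2 / (2 * eps ^ 2)) by (apply Rmult_le_pos; [lra| left; apply Rinv_0_lt_compat; lra]).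
          nra.
      - assert (Hn' : (1 <= n - 1 <= N)%nat) by lia.
        assert (Htp := Htau _ Hn').
        destruct (ab_rel (tau_k t n) (tau_k t (n - 1)%nat) Htn_pos Htp) as [Hid Hbt].
        rewrite <- (Hrat2 n ltac:(lia)) in Hid, Hbt. fold (a n) (b n) in Hid, Hbt.
        assert (Ht2 : 0 <= t (n - 2)%nat <= t (n - 1)%nat) by (split; [apply Htk; lia| apply (tmono t N Hmono); lia]).
        assert (HBt : Rabs (D nil x y (t (n - 1)%nat) - D nil x y (t (n - 2)%nat) - tau_k t (n - 1)%nat * g)
                 <= K2 * tau_k t (n - 1)%nat * (2 * tau_k t n + tau_k t (n - 1)%nat)).
        { pose proof (time_tay D x y K2 T (t (n - 2)%nat) (t (n - 1)%nat) (t n) HDp Ht2 ltac:(lra) Htn HK2xy) as H.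
          fold g in H. replace (n - 1 - 1)%nat with (n - 2)%nat in H by lia.
          unfold tau_k. replace (n - 1 - 1)%nat with (n - 2)%nat by lia.
          rewrite (Rabs_left (t (n - 1)%nat - t n)) in H by (pose proof (Hmono n Hn); lra).
          rewrite (Rabs_left (t (n - 2)%nat - t n)) in H by (pose proof (Hmono n Hn); lra).
          unfold tau_k in H. replace (n - 1 - 1)%nat with (n - 2)%nat in H by lia.
          eapply Rle_trans; [exact H|]. right. ring. }
        eapply Rle_trans.
        + apply (time_alg (a n) (b n) (tau_k t n) (tau_k t (n - 1)%nat) _ _ g K2); auto; try lra.
        + pose proof (Htauh n Hn). pose proof (Htauh _ Hn'). nra. }
    unfold xi. unfold PF in HPF. fold g in HPF.
    unfold ug at 2 3. fold x y. cbv beta. fold x y.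
    replace (D2 t ug n i j - eps ^ 2 * lap_h M h (fun i0 j0 => D nil (INR i0 * h) (INR j0 * h) (t n)) i j + f_ac (D nil x y (t n)))
      with ((D2 t ug n i j - g) - eps ^ 2 * (lap_h M h (fun i0 j0 => D nil (INR i0 * h) (INR j0 * h) (t n)) i j
              - (D (0%nat :: 0%nat :: nil) x y (t n) + D (1%nat :: 1%nat :: nil) x y (t n)))) by lra.
    eapply Rle_trans; [apply Rabs_triang|]. rewrite Rabs_Ropp, Rabs_mult, (Rabs_right (eps ^ 2)) by lra.
    assert (eps ^ 2 * Rabs (lap_h M h (fun i0 j0 => D nil (INR i0 * h) (INR j0 * h) (t n)) i j -
        (D (0%nat :: 0%nat :: nil) x y (t n) + D (1%nat :: 1%nat :: nil) x y (t n))) <= eps ^ 2 * (4 * K4 * h ^ 2))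
      by (apply Rmult_le_compat_l; lra).
    assert (Hc : 5 * K2 * (h ^ 2 / (2 * eps ^ 2)) + eps ^ 2 * (4 * K4 * h ^ 2) <= Cx * h ^ 2).
    { unfold Cx. replace (5 * K2 * (h ^ 2 / (2 * eps ^ 2))) with (5 / 2 * K2 / eps ^ 2 * h ^ 2) by (field; lra).
      replace ((3 * K2 / eps ^ 2 + 4 * eps ^ 2 * K4) * h ^ 2) with (3 * K2 / eps ^ 2 * h ^ 2 + eps ^ 2 * (4 * K4 * h ^ 2)) by ring.
      assert (5 / 2 * K2 / eps ^ 2 <= 3 * K2 / eps ^ 2).
      { unfold Rdiv. apply Rmult_le_compat_r; [left; apply Rinv_0_lt_compat; lra| lra]. }
      nra. }
    lra. }
  set (e := fun k i j => ug k i j - U k i j).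
  set (G := fun k i j => ug k i j ^ 2 + ug k i j * U k i j + U k i j ^ 2 - 1).
  assert (HEq : forall n, (1 <= n <= N)%nat -> forall i j, (i < M)%nat -> (j < M)%nat ->
     a n * (e n i j - e (n - 1)%nat i j) - b n * (e (n - 1)%nat i j - e (n - 2)%nat i j)
     = eps ^ 2 * lap_h M h (e n) i j - G n i j * e n i j + xi n i j).
  { intros n Hn i j Hi Hj.
    pose proof (Hscheme n i j Hn Hi Hj) as HS. rewrite HD2 in HS by auto.
    assert (HX : xi n i j = D2 t ug n i j - eps ^ 2 * lap_h M h (ug n) i j + f_ac (ug n i j)) by reflexivity.
    rewrite HD2 in HX by auto.
    unfold e. rewrite lap_sub. unfold G, f_ac in *. 
    replace (lap_h M h (fun i0 j0 => ug n i0 j0) i j) with (lap_h M h (ug n) i j) by reflexivity.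
    replace (lap_h M h (fun i0 j0 => U n i0 j0) i j) with (lap_h M h (U n) i j) by reflexivity.
    nra. }
  set (Ps := fun k => Psi_f A eta h (t k)).
  assert (HcaseB : forall n0, (n0 <= N)%nat -> Ps n0 < 1/16 -> forall k, (k <= n0)%nat ->
     (forall i j, (i < M)%nat -> (j < M)%nat -> Rabs (e k i j) <= Ps k) /\
     ((1 <= k)%nat -> forall i j, (i < M)%nat -> (j < M)%nat ->
         Rabs (e k i j - eta * e (k - 1)%nat i j) <= (1 - eta) * Ps k)).
  { intros n0 Hn0 HP. induction k as [|k IH]; intros Hk.
    - split; [|lia]. intros i j Hi Hj. unfold e, ug. rewrite Hinit, Ht0 by auto.
      replace (D nil (INR i * h) (INR j * h) 0 - D nil (INR i * h) (INR j * h) 0) with 0 by ring.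
      rewrite Rabs_R0. apply Psi_nonneg; lra.
    - destruct (IH ltac:(lia)) as [IH1 IH2].
      assert (Hn : (1 <= S k <= N)%nat) by lia.
      destruct (Hcoef (S k) Hn) as [Hc1 [Hc2 [Hc3 [Hc4 _]]]].
      assert (Htk0 : 0 <= t k) by (apply Htk; lia).
      assert (HPk : 0 <= Ps k) by (apply Psi_nonneg; lra).
      assert (HXi : 0 <= Cx * h ^ 2) by nra.
      assert (HtauS := Htau (S k) Hn).
      assert (HK1t : K1 * tau_k t (S k) <= 1/16).
      { apply (small_tau A K1 eps (tau_k t (S k)) (Ps n0)); auto; try lra.
        assert (Hlow := Psi_lower A eta h (t n0) HA0 ltac:(lra) ltac:(apply Htk; lia)).
        assert (Htn0 : tau_k t (S k) <= t n0) by (apply Htau_le; lia).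
        assert (Hth := Htauh (S k) Hn).
        assert (h ^ 2 >= 2 * eps ^ 2 * tau_k t (S k)).
        { apply (Rmult_le_compat_r (2 * eps ^ 2)) in Hth; [|lra].
          replace (h ^ 2 / (2 * eps ^ 2) * (2 * eps ^ 2)) with (h ^ 2) in Hth by (field; lra). lra. }
        unfold Ps. assert (A * tau_k t (S k) * (2 * eps ^ 2 * tau_k t (S k)) <= A * t n0 * h ^ 2).
        { apply Rmult_le_compat; try nra. }
        nra. }
      assert (HPkn : Ps k <= Ps n0) by (apply Psi_mono; try lra; split; [lra| apply (tmono t N Hmono); lia]).
      assert (HG : forall i j, (i < M)%nat -> (j < M)%nat -> -1 <= G (S k) i j <= 5/2).
      { intros i j Hi Hj.
        destruct (HMP (S k) ltac:(lia)) as [HU _]. specialize (HU i j Hi Hj).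
        destruct (HMP k ltac:(lia)) as [HUk _]. specialize (HUk i j Hi Hj).
        specialize (IH1 i j Hi Hj).
        assert (Hl : Rabs (ug (S k) i j - ug k i j) <= K1 * tau_k t (S k)).
        { unfold ug, tau_k. replace (S k - 1)%nat with k by lia.
          apply (time_lip D (INR i * h) (INR j * h) K1 T (t k) (t (S k))); auto.
          - split; [lra| apply (tmono t N Hmono); lia].
          - apply Htk; lia.
          - intros z Hz. apply HB1; auto; pose proof (Hgrid i Hi); pose proof (Hgrid j Hj); lra. }
        assert (Hug : Rabs (ug (S k) i j) <= 9/8).
        { unfold e in IH1.
          pose proof (Rabs_triang (ug (S k) i j - ug k i j) (ug k i j - U k i j)).
          pose proof (Rabs_triang (ug (S k) i j - ug k i j + (ug k i j - U k i j)) (U k i j)).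
          replace (ug (S k) i j - ug k i j + (ug k i j - U k i j) + U k i j) with (ug (S k) i j) in H0 by ring.
          assert (Rabs (U k i j) <= 1) by (apply Rabs_le; lra). lra. }
        apply Rabs_le_between in Hug.
        unfold G. split; nra. }
      assert (Hstab := grid_stab M h eps eta (a (S k)) (b (S k)) (c (S k)) (Ps k) (Cx * h ^ 2)
                 (e (S k)) (e k) (e (k - 1)%nat) (G (S k)) (xi (S k))
                 HM Hh (Hab _ Hn) Hc1 Hc2 ltac:(lra) Hc3 HPk HXi IH1).
      assert (HW : b (S k) = 0 \/ forall i j, (i < M)%nat -> (j < M)%nat ->
                 Rabs (e k i j - eta * e (k - 1)%nat i j) <= (1 - eta) * Ps k).
      { destruct k as [|k']; [left; exact Hb1| right; apply IH2; lia]. }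
      specialize (Hstab HW HG (Hxi (S k) Hn)).
      assert (Heq' : forall i j, (i < M)%nat -> (j < M)%nat ->
           a (S k) * (e (S k) i j - e k i j) - b (S k) * (e k i j - e (k - 1)%nat i j) =
           eps ^ 2 * lap_h M h (e (S k)) i j - G (S k) i j * e (S k) i j + xi (S k) i j).
      { intros i j Hi Hj. rewrite <- HEq by auto.
        replace (S k - 1)%nat with k by lia. replace (S k - 2)%nat with (k - 1)%nat by lia. reflexivity. }
      specialize (Hstab Heq').
      assert (Hinv : / (a (S k) - 1) <= 2 * tau_k t (S k)).
      { assert (1 / tau_k t (S k) <= a (S k)) by auto.
        assert (a (S k) - 1 >= 1 / (2 * tau_k t (S k))).
        { assert (a (S k) / 2 >= 1 / (2 * tau_k t (S k))).
          { unfold Rdiv. rewrite Rinv_mult. unfold Rdiv in H. nra. }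
          lra. }
        replace (2 * tau_k t (S k)) with (/ (1 / (2 * tau_k t (S k)))) by (field; lra).
        apply Rinv_le_contravar; [apply Rdiv_lt_0_compat; lra| lra]. }
      assert (HtS : t (S k) = t k + tau_k t (S k)) by (unfold tau_k; replace (S k - 1)%nat with k by lia; ring).
      assert (Hrec := rec_ineq A Cx eta h (t k) (tau_k t (S k)) HCx HA1 ltac:(lra) Htk0 HtauS).
      rewrite <- HtS in Hrec. fold (Ps k) (Ps (S k)) in Hrec.
      assert (Hw : forall i j, (i < M)%nat -> (j < M)%nat ->
                  Rabs (e (S k) i j - eta * e k i j) <= (1 - eta) * Ps (S k)).
      { intros i j Hi Hj. eapply Rle_trans; [apply Hstab; auto|].
        assert ((2 * Ps k + Cx * h ^ 2) / (a (S k) - 1) <= 2 * tau_k t (S k) * (2 * Ps k + Cx * h ^ 2)).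
        { unfold Rdiv. rewrite Rmult_comm. apply Rmult_le_compat_r; lra. }
        lra. }
      assert (HPmono : Ps k <= Ps (S k)) by (apply Psi_mono; lra).
      split.
      + intros i j Hi Hj. specialize (Hw i j Hi Hj). specialize (IH1 i j Hi Hj).
        pose proof (Rabs_triang (e (S k) i j - eta * e k i j) (eta * e k i j)).
        replace (e (S k) i j - eta * e k i j + eta * e k i j) with (e (S k) i j) in H by ring.
        rewrite Rabs_mult, (Rabs_right eta) in H by lra.
        assert (eta * Rabs (e k i j) <= eta * Ps k) by (apply Rmult_le_compat_l; lra).
        nra.
      + intros _ i j Hi Hj. replace (S k - 1)%nat with k by lia. apply Hw; auto. }
  intros n Hn i j Hi Hj.
  change (D nil (INR i * h) (INR j * h) (t n) - U n i j) with (e n i j).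
  assert (Htn : 0 <= t n <= T) by (apply Htk; lia).
  assert (HPn : 0 <= Ps n) by (apply Psi_nonneg; lra).
  assert (Hrhs : 16 * (K0 + 1) * Ps n <= 16 * A * (K0 + 1) * t n / (1 - eta) * exp (4 * t n / (1 - eta)) * (tau_max t N ^ 2 + h ^ 2)).
  { unfold Ps, Psi_f.
    assert (0 <= A * t n / (1 - eta) * exp (4 * t n / (1 - eta))).
    { apply Rmult_le_pos; [|left; apply exp_pos]. apply Rmult_le_pos; [nra| left; apply Rinv_0_lt_compat; lra]. }
    assert (0 <= tau_max t N ^ 2) by apply pow2_ge_0.
    replace (16 * A * (K0 + 1) * t n / (1 - eta) * exp (4 * t n / (1 - eta)) * (tau_max t N ^ 2 + h ^ 2))
      with (16 * (K0 + 1) * (A * t n / (1 - eta) * exp (4 * t n / (1 - eta))) * (tau_max t N ^ 2 + h ^ 2)) by (field; lra).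
    replace (16 * (K0 + 1) * (A * t n / (1 - eta) * exp (4 * t n / (1 - eta)) * h ^ 2))
      with (16 * (K0 + 1) * (A * t n / (1 - eta) * exp (4 * t n / (1 - eta))) * h ^ 2) by ring.
    apply Rmult_le_compat_l; [nra| lra]. }
  destruct (Rlt_dec (Ps n) (1/16)) as [Hs|Hs].
  - destruct (HcaseB n ltac:(lia) Hs n ltac:(lia)) as [H1 _]. specialize (H1 i j Hi Hj).
    assert (Ps n <= 16 * (K0 + 1) * Ps n) by nra. lra.
  - assert (Hbig : K0 + 1 <= 16 * (K0 + 1) * Ps n) by nra.
    assert (Rabs (e n i j) <= K0 + 1).
    { unfold e, ug. pose proof (Hgrid i Hi). pose proof (Hgrid j Hj).
      assert (Rabs (D nil (INR i * h) (INR j * h) (t n)) <= K0) by (apply HB0; lra).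
      destruct (HMP n ltac:(lia)) as [HU _]. specialize (HU i j Hi Hj).
      assert (Rabs (U n i j) <= 1) by (apply Rabs_le; lra).
      pose proof (Rabs_triang (D nil (INR i * h) (INR j * h) (t n)) (- U n i j)).
      rewrite Rabs_Ropp in H3. unfold Rminus. lra. }
    lra.
Qed.
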